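(* Let $(\mathcal L,\mathcal M,\mathcal P)$ be a solution of the dispersionless $N$-modified KP hierarchy, with $v_m$ the coefficients of $\mathcal M$. Then $\mathcal P$ has the following expansion in powers of $\mathcal L$: \[ \mathcal P=\mathcal L^N\exp\Bigl(\sum_{m\ge1}\frac{-1}{m}\frac{\partial v_m}{\partial s}\mathcal L^{-m}\Bigr). \]
   Context: Fix a positive integer $N$. Let $x,s$ be variables and $t=(t_1,t_2,\dots)$. Consider formal Laurent series in $k$ with coefficients depending on $(x,t,s)$: $\mathcal L=k+\sum_{n\ge2}u_n(t;s)k^{1-n}$, $\mathcal M=\sum_{n\ge1}nt_n\mathcal L^{n-1}+x+Ns\mathcal L^{-1}+\sum_{i\ge1}v_i(t;s)\mathcal L^{-i-1}$, and the polynomial $\mathcal P=k^N+p_{N-1}k^{N-1}+\dots+p_0$. The Poisson bracket is $\{F,G\}=\frac{\partial F}{\partial k}\frac{\partial G}{\partial x}-\frac{\partial F}{\partial x}\frac{\partial G}{\partial k}$. For a Laurent series in $k$, $(\cdot)_{\ge0}$ is the polynomial part and $(\cdot)_{<0}$ the part with negative powers; $\mathcal B_n=(\mathcal L^n)_{\ge0}$. The dispersionless $N$-modified KP hierarchy is the system: $\partial\mathcal L/\partial t_n=\{\mathcal B_n,\mathcal L\}$, $\partial\mathcal M/\partial t_n=\{\mathcal B_n,\mathcal M\}$ ($n\ge1$), $\{\mathcal L,\mathcal M\}=1$, $(\partial\mathcal L/\partial s)\mathcal P=\{\mathcal P,\mathcal L\}$, $(\partial\mathcal M/\partial s)\mathcal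 P=\{\mathcal P,\mathcal M\}$, $-(\partial\mathcal B_n/\partial s)\mathcal P=-\partial\mathcal P/\partial t_n-\{\mathcal P,\mathcal B_n\}$ ($n\ge1$). *)

(* Defs.v *)
From Stdlib Require Import Reals ZArith.
From Coquelicot Require Import Coquelicot.
Open Scope R_scope.

(* Formal Laurent series in k (at a fixed point (x,t,s)):             *)
(* f : Z -> R, f j = coefficient of k^j.  All series used below have   *)
(* support bounded above, so every sum written with Series is a sum of *)
(* an eventually-zero sequence, i.e. a genuine finite sum.             *)
Definition ser := Z -> R.

Definition addS (f g : ser) : ser := fun j => f j + g j.
Definition oppS (f : ser) : ser := fun j => - f j.
Definition subS (f g : ser) : ser := fun j => f j - g j.
Definition scalS (c : R) (f : ser) : ser := fun j => c * f j.
Definition oneS : ser := fun j => if Z.eqb j 0 then 1 else 0.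
Definition kS : ser := fun j => if Z.eqb j 1 then 1 else 0.

(* Cauchy product: (f g)_j = sum_{a in Z} f_a g_{j-a}, split as a >= 0 and a < 0. *)
Definition mulS (f g : ser) : ser := fun j =>
  Series (fun n => f (Z.of_nat n) * g (j - Z.of_nat n)%Z) +
  Series (fun n => f (- Z.of_nat n - 1)%Z * g (j + Z.of_nat n + 1)%Z).

Fixpoint powS (f : ser) (n : nat) : ser :=
  match n with O => oneS | S m => mulS f (powS f m) end.

Definition sumS (F : nat -> ser) : ser := fun j => Series (fun m => F m j).

Definition shiftS (d : Z) (f : ser) : ser := fun j => f (j - d)%Z.

(* Inverse of a series of the form L = k + (terms of degree <= 0):
   L = k (1 + w), w = k^{-1}(L - k),  L^{-1} = k^{-1} sum_m (-w)^m. *)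
Definition invS (L : ser) : ser :=
  let w := shiftS (-1) (subS L kS) in
  shiftS (-1) (sumS (fun m => powS (oppS w) m)).

Definition zpowS (L : ser) (n : Z) : ser :=
  match n with
  | Z0 => oneS
  | Zpos q => powS L (Pos.to_nat q)
  | Zneg q => powS (invS L) (Pos.to_nat q)
  end.

Definition posPart (f : ser) : ser := fun j => if Z.leb 0 j then f j else 0.

Definition dkS (f : ser) : ser := fun j => IZR (j + 1) * f (j + 1)%Z.

(* exponential of a series of degree <= -1 *)
Definition expS (E : ser) : ser :=
  sumS (fun j => scalS (/ INR (fact j)) (powS E j)).

(* Coefficients depending on (x, t, s), t = (t_1, t_2, ...) : nat -> R *)
(* (the entry t 0 is unused).                                          *)
Definition coef := R -> (nat -> R) -> R -> R.
Definition fser := R -> (nat -> R) -> R -> ser.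

Definition upd (t : nat -> R) (n : nat) (h : R) : nat -> R :=
  fun m => if Nat.eqb m n then h else t m.

Definition finsupp (t : nat -> R) : Prop :=
  exists K : nat, forall n, (K < n)%nat -> t n = 0.

Definition dxC (c : coef) : coef := fun x t s => Derive (fun y => c y t s) x.
Definition dsC (c : coef) : coef := fun x t s => Derive (fun y => c x t y) s.
Definition dtC (n : nat) (c : coef) : coef :=
  fun x t s => Derive (fun h => c x (upd t n h) s) (t n).

Definition dxF (F : fser) : fser := fun x t s j => Derive (fun y => F y t s j) x.
Definition dsF (F : fser) : fser := fun x t s j => Derive (fun y => F x t y j) s.
Definition dtF (n : nat) (F : fser) : fser :=
  fun x t s j => Derive (fun h => F x (upd t n h) s j) (t n).

Definition bracket (F G : fser) : fser := fun x t s =>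
  subS (mulS (dkS (F x t s)) (dxF G x t s)) (mulS (dxF F x t s) (dkS (G x t s))).

(* L = k + sum_{n>=2} u_n k^{1-n} *)
Definition Lfield (u : nat -> coef) : fser := fun x t s j =>
  if Z.eqb j 1 then 1
  else if Z.leb j (-1) then u (Z.to_nat (1 - j)) x t s
  else 0.

(* P = k^N + p_{N-1} k^{N-1} + ... + p_0 *)
Definition Pfield (N : nat) (p : nat -> coef) : fser := fun x t s j =>
  if Z.eqb j (Z.of_nat N) then 1
  else if andb (Z.leb 0 j) (Z.ltb j (Z.of_nat N)) then p (Z.to_nat j) x t s
  else 0.

(* M = sum_{n>=1} n t_n L^{n-1} + x + N s L^{-1} + sum_{i>=1} v_i L^{-i-1} *)
Definition Mfield (N : nat) (u v : nat -> coef) : fser := fun x t s =>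
  let L := Lfield u x t s in
  addS (sumS (fun n => scalS (INR n * t n) (zpowS L (Z.of_nat n - 1))))
   (addS (scalS x oneS)
    (addS (scalS (INR N * s) (invS L))
          (sumS (fun i => scalS (v (S i) x t s) (zpowS L (- Z.of_nat (S i) - 1)))))).

Definition Bfield (u : nat -> coef) (n : nat) : fser := fun x t s =>
  posPart (powS (Lfield u x t s) n).

(* regularity: differentiable in each variable (implicit in the paper) *)
Definition regular (c : coef) : Prop :=
  forall x t s, finsupp t ->
    ex_derive (fun y => c y t s) x /\ ex_derive (fun y => c x t y) s /\
    forall n, ex_derive (fun h => c x (upd t n h) s) (t n).

Definition dNmKP_solution (N : nat) (u v p : nat -> coef) : Prop :=
  let L := Lfield u in
  let M := Mfield N u v in
  let P := Pfield N p in
  forall x t s, finsupp t ->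
    (forall n, (1 <= n)%nat -> dtF n L x t s = bracket (Bfield u n) L x t s) /\
    (forall n, (1 <= n)%nat -> dtF n M x t s = bracket (Bfield u n) M x t s) /\
    bracket L M x t s = oneS /\
    mulS (dsF L x t s) (P x t s) = bracket P L x t s /\
    mulS (dsF M x t s) (P x t s) = bracket P M x t s /\
    (forall n, (1 <= n)%nat ->
       oppS (mulS (dsF (Bfield u n) x t s) (P x t s))
       = subS (oppS (dtF n P x t s)) (bracket P (Bfield u n) x t s)).

(* Main.v *)
Require Import Defs.
From Stdlib Require Import Reals ZArith Lia Lra List FunctionalExtensionality ProofIrrelevance Ring Classical.
From Coquelicot Require Import Coquelicot.
Import ListNotations.
Open Scope R_scope.


Definition lsum (F : Z -> R) (l : list Z) : R := fold_right (fun a r => F a + r) 0 l.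

Lemma lsum_nil F : lsum F [] = 0. Proof. reflexivity. Qed.
Lemma lsum_cons F a l : lsum F (a :: l) = F a + lsum F l. Proof. reflexivity. Qed.
Lemma lsum_app F l1 l2 : lsum F (l1 ++ l2) = lsum F l1 + lsum F l2.
Proof. induction l1; simpl; [lra|]. unfold lsum in *. simpl. rewrite IHl1. lra. Qed.
Lemma lsum_ext F G l : (forall a, In a l -> F a = G a) -> lsum F l = lsum G l.
Proof. induction l; intros H; simpl; auto. unfold lsum in *; simpl.
 rewrite H by (left; auto). rewrite IHl; auto. intros; apply H; right; auto. Qed.
Lemma lsum_plus F G l : lsum (fun a => F a + G a) l = lsum F l + lsum G l.
Proof. induction l; unfold lsum in *; simpl; [lra|]. rewrite IHl; lra. Qed.
Lemma lsum_opp F l : lsum (fun a => - F a) l = - lsum F l.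
Proof. induction l; unfold lsum in *; simpl; [lra|]. rewrite IHl; lra. Qed.
Lemma lsum_scal c F l : lsum (fun a => c * F a) l = c * lsum F l.
Proof. induction l; unfold lsum in *; simpl; [lra|]. rewrite IHl; lra. Qed.
Lemma lsum_zero F l : (forall a, In a l -> F a = 0) -> lsum F l = 0.
Proof. intros H. rewrite (lsum_ext F (fun _ => 0)) by auto. clear H. induction l; unfold lsum in *; simpl; auto.
 rewrite IHl. lra. Qed.
Lemma lsum_map F g l : lsum F (map g l) = lsum (fun a => F (g a)) l.
Proof. induction l; unfold lsum in *; simpl; auto. rewrite IHl; auto. Qed.
Lemma lsum_swap (F : Z -> Z -> R) l1 l2 :
  lsum (fun a => lsum (fun b => F a b) l2) l1 = lsum (fun b => lsum (fun a => F a b) l1) l2.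
Proof. induction l1.
 - symmetry. apply lsum_zero. intros; reflexivity.
 - rewrite lsum_cons, IHl1, <- lsum_plus. apply lsum_ext. intros; reflexivity. Qed.

Lemma lsum_remove F a l : NoDup l -> In a l -> lsum F l = F a + lsum F (remove Z.eq_dec a l).
Proof. induction l as [|b l IH]; intros Hn Hi; [destruct Hi|]. inversion Hn; subst.
 simpl remove. destruct (Z.eq_dec a b).
 - subst. rewrite notin_remove by auto. reflexivity.
 - destruct Hi as [->|Hi]; [congruence|]. rewrite lsum_cons, lsum_cons, (IH H2 Hi). lra. Qed.

Lemma NoDup_remove_Z a l : NoDup l -> NoDup (remove Z.eq_dec a l).
Proof. induction l; intros H; simpl; auto. inversion H; subst. destruct (Z.eq_dec a a0); auto.
 constructor; auto. intros Hi. apply in_remove in Hi. tauto. Qed.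

Lemma lsum_indep F l1 l2 : NoDup l1 -> NoDup l2 ->
  (forall a, F a <> 0 -> (In a l1 <-> In a l2)) -> lsum F l1 = lsum F l2.
Proof. revert l2; induction l1 as [|a l1 IH]; intros l2 H1 H2 H.
 - symmetry. apply lsum_zero. intros b Hb. destruct (Req_dec (F b) 0); auto. apply H in H0. apply H0 in Hb. destruct Hb.
 - inversion H1; subst. rewrite lsum_cons. destruct (in_dec Z.eq_dec a l2) as [Hi|Hi].
   + rewrite (lsum_remove F a l2 H2 Hi). f_equal. apply IH; auto. apply NoDup_remove_Z; auto.
     intros b Hb. specialize (H b Hb). split; intros.
     * apply in_in_remove. intros ->; tauto. apply H. right; auto.
     * apply in_remove in H0. destruct H0. apply H in H0. destruct H0; [congruence|auto].
   + assert (F a = 0). { destruct (Req_dec (F a) 0); auto. exfalso. apply Hi. apply H; auto. left; auto. }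
     rewrite H0, Rplus_0_l. apply IH; auto. intros b Hb. specialize (H b Hb). split; intros.
     * apply H; right; auto.
     * apply H in H3. destruct H3; auto. subst. tauto. Qed.

Lemma inj_map_NoDup {A B} (g : A -> B) l : (forall x y, g x = g y -> x = y) -> NoDup l -> NoDup (map g l).
Proof. intros Hg Hl. apply NoDup_map_NoDup_ForallPairs; auto. intros x y _ _; apply Hg. Qed.
Definition zr (lo : Z) (n : nat) : list Z := map (fun i => (lo + Z.of_nat i)%Z) (seq 0 n).
Lemma zr_In lo n a : In a (zr lo n) <-> (lo <= a < lo + Z.of_nat n)%Z.
Proof. unfold zr. rewrite in_map_iff. split.
 - intros [i [<- Hi]]. apply in_seq in Hi. lia.
 - intros H. exists (Z.to_nat (a - lo)). split; [lia|]. apply in_seq. lia. Qed.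
Lemma zr_NoDup lo n : NoDup (zr lo n).
Proof. unfold zr. apply inj_map_NoDup. intros x y; lia. apply seq_NoDup. Qed.
Definition win (lo hi : Z) := zr lo (Z.to_nat (hi - lo + 1)).
Lemma win_In lo hi a : In a (win lo hi) <-> (lo <= a <= hi)%Z.
Proof. unfold win. rewrite zr_In. lia. Qed.
Lemma win_NoDup lo hi : NoDup (win lo hi). Proof. apply zr_NoDup. Qed.

Lemma map_NoDup_inj (g : Z -> Z) l : (forall x y, g x = g y -> x = y) -> NoDup l -> NoDup (map g l).
Proof. intros Hg Hl. apply inj_map_NoDup; auto. Qed.

Lemma Series_fin (a : nat -> R) K : (forall n, (K < n)%nat -> a n = 0) -> Series a = sum_n a K.
Proof. intros H. apply is_series_unique. unfold is_series.
 apply (filterlim_ext_loc (fun _ => sum_n a K)).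
 - exists K. intros n Hn. induction n. { assert (K = 0)%nat by lia. subst; reflexivity. }
   destruct (Nat.eq_dec K (S n)). { subst; reflexivity. }
   rewrite sum_Sn, H by lia. rewrite IHn by lia. change plus with Rplus. lra.
 - apply filterlim_const. Qed.

Lemma sum_n_lsum (G : Z -> R) (h : nat -> Z) K :
  sum_n (fun n => G (h n)) K = lsum G (map h (seq 0 (S K))).
Proof. induction K.
 - rewrite sum_O. simpl. unfold lsum; simpl. lra.
 - rewrite sum_Sn, IHK. rewrite (seq_S (S K) 0), map_app, lsum_app. simpl (map h [_]). rewrite lsum_cons, lsum_nil.
   change plus with Rplus. lra. Qed.

Definition bnd (B : Z) (f : ser) := forall j, (B < j)%Z -> f j = 0.

Lemma mulS_win f g Bf Bg j l : bnd Bf f -> bnd Bg g -> NoDup l ->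
  (forall a, f a * g (j - a)%Z <> 0 -> In a l) ->
  mulS f g j = lsum (fun a => f a * g (j - a)%Z) l.
Proof. intros hf hg hl hs. unfold mulS.
 set (T := fun a => f a * g (j - a)%Z).
 rewrite (Series_fin _ (Z.to_nat Bf)).
 2:{ intros n Hn. rewrite hf by lia. lra. }
 rewrite (Series_fin _ (Z.to_nat (Bg - j))).
 2:{ intros n Hn. assert (E: g (j + Z.of_nat n + 1)%Z = 0) by (apply hg; lia). rewrite E. lra. }
 rewrite (sum_n_ext _ (fun n => T (Z.of_nat n))) by reflexivity.
 rewrite (sum_n_ext (fun n => f (- Z.of_nat n - 1)%Z * g (j + Z.of_nat n + 1)%Z) (fun n => T ((fun n => - Z.of_nat n - 1)%Z n))).
 2:{ intros n. unfold T. replace (j - (- Z.of_nat n - 1))%Z with (j + Z.of_nat n + 1)%Z by lia. reflexivity. }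
 rewrite !sum_n_lsum, <- lsum_app. apply lsum_indep; auto.
 - apply NoDup_app; try (apply inj_map_NoDup; [intros; lia| apply seq_NoDup]).
   intros a H1 H2. apply in_map_iff in H1, H2. destruct H1 as [x [<- _]], H2 as [y [Hy _]]. lia.
 - intros a Ha. split; intros; [apply hs; auto|]. apply in_or_app.
   destruct (Z_lt_le_dec a 0).
   + right. apply in_map_iff. exists (Z.to_nat (- a - 1)). split; [lia|]. apply in_seq.
     destruct (Z_le_gt_dec (j - a) Bg); [lia|]. exfalso. apply Ha. unfold T. rewrite hg by lia. lra.
   + left. apply in_map_iff. exists (Z.to_nat a). split; [lia|]. apply in_seq.
     destruct (Z_le_gt_dec a Bf); [lia|]. exfalso. apply Ha. unfold T. rewrite hf by lia. lra.
Qed.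

Lemma lsum_win_ext F lo hi lo' hi' :
  (forall a, F a <> 0 -> (lo <= a <= hi /\ lo' <= a <= hi')%Z) ->
  lsum F (win lo hi) = lsum F (win lo' hi').
Proof. intros H. apply lsum_indep; try apply win_NoDup. intros a Ha. rewrite !win_In. specialize (H a Ha). lia. Qed.

Lemma lsum_shift F c lo hi :
  lsum F (win lo hi) = lsum (fun b => F (b + c)%Z) (win (lo - c) (hi - c)).
Proof. rewrite <- (lsum_map F (fun b => (b + c)%Z)). apply lsum_indep.
 - apply win_NoDup. - apply inj_map_NoDup; [intros; lia|apply win_NoDup].
 - intros a _. rewrite win_In, in_map_iff. split.
   + intros H. exists (a - c)%Z. rewrite win_In. split; lia.
   + intros [b [<- Hb]]. rewrite win_In in Hb. lia. Qed.

Lemma lsum_refl F c lo hi :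
  lsum F (win lo hi) = lsum (fun b => F (c - b)%Z) (win (c - hi) (c - lo)).
Proof. rewrite <- (lsum_map F (fun b => (c - b)%Z)). apply lsum_indep.
 - apply win_NoDup. - apply inj_map_NoDup; [intros; lia|apply win_NoDup].
 - intros a _. rewrite win_In, in_map_iff. split.
   + intros H. exists (c - a)%Z. rewrite win_In. split; lia.
   + intros [b [<- Hb]]. rewrite win_In in Hb. lia. Qed.

Lemma mulS_W f g Bf Bg j lo hi : bnd Bf f -> bnd Bg g -> (lo <= j - Bg)%Z -> (Bf <= hi)%Z ->
  mulS f g j = lsum (fun a => f a * g (j - a)%Z) (win lo hi).
Proof. intros hf hg h1 h2. apply (mulS_win f g Bf Bg); auto. apply win_NoDup.
 intros a Ha. apply win_In. destruct (Z_le_gt_dec a Bf); [|rewrite hf in Ha by lia; lra].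
 destruct (Z_le_gt_dec (j - a) Bg); [lia|rewrite hg in Ha by lia; lra]. Qed.

Lemma bnd_mono B B' f : (B <= B')%Z -> bnd B f -> bnd B' f.
Proof. intros h hf j hj. apply hf. lia. Qed.

Lemma bnd_mul Bf Bg f g : bnd Bf f -> bnd Bg g -> bnd (Bf + Bg) (mulS f g).
Proof. intros hf hg j hj. rewrite (mulS_win f g Bf Bg j []); auto. constructor.
 intros a Ha. destruct (Z_le_gt_dec a Bf); [|rewrite hf in Ha by lia; lra].
 rewrite hg in Ha by lia. lra. Qed.

Lemma lsum_win1 F a : lsum F (win a a) = F a.
Proof. unfold win, zr. replace (Z.to_nat (a - a + 1)) with 1%nat by lia. unfold lsum; simpl.
 rewrite Z.add_0_r. lra. Qed.

Lemma mul_lead Bf Bg f g : bnd Bf f -> bnd Bg g -> mulS f g (Bf + Bg)%Z = f Bf * g Bg.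
Proof. intros hf hg. rewrite (mulS_W f g Bf Bg _ Bf Bf); auto; try lia.
 rewrite lsum_win1. replace (Bf + Bg - Bf)%Z with Bg by lia. lra. Qed.

Lemma mulS_comm_b f g Bf Bg : bnd Bf f -> bnd Bg g -> mulS f g = mulS g f.
Proof. intros hf hg. extensionality j.
 rewrite (mulS_W f g Bf Bg j (j - Bg) Bf), (mulS_W g f Bg Bf j (j - Bf) Bg); auto; try lia.
 rewrite (lsum_refl _ j). replace (j - Bf)%Z with (j - Bf)%Z by lia. replace (j - (j - Bg))%Z with Bg by lia.
 apply lsum_ext. intros a _. replace (j - (j - a))%Z with a by lia. lra. Qed.

Lemma mulS_assoc_b f g h Bf Bg Bh : bnd Bf f -> bnd Bg g -> bnd Bh h ->
  mulS (mulS f g) h = mulS f (mulS g h).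
Proof. intros hf hg hh. extensionality j.
 set (A := (Z.abs j + Z.abs Bf + Z.abs Bg + Z.abs Bh)%Z).
 assert (Ha : (Z.abs j <= A /\ Z.abs Bf <= A /\ Z.abs Bg <= A /\ Z.abs Bh <= A)%Z) by (unfold A; lia).
 rewrite (mulS_W _ h (Bf + Bg) Bh j (-3*A) (3*A)); [| apply bnd_mul; auto | auto | lia | lia].
 rewrite (mulS_W f _ Bf (Bg + Bh) j (-3*A) (3*A)); [| auto | apply bnd_mul; auto | lia | lia].
 transitivity (lsum (fun c => lsum (fun a => f a * g (c - a)%Z * h (j - c)%Z) (win (-3*A) (3*A))) (win (-3*A) (3*A))).
 - apply lsum_ext. intros c Hc. rewrite win_In in Hc.
   destruct (Z_le_gt_dec (j - c) Bh).
   + rewrite (mulS_W f g Bf Bg c (-3*A) (3*A)); auto; try lia.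
     rewrite Rmult_comm, <- lsum_scal. apply lsum_ext. intros; ring.
   + rewrite (hh (j - c)%Z) by lia. rewrite lsum_zero; [lra|]. intros; ring.
 - rewrite lsum_swap. apply lsum_ext. intros a Hai. rewrite win_In in Hai.
   destruct (Z_le_gt_dec a Bf).
   + rewrite (mulS_W g h Bg Bh (j - a) (-5*A) (5*A)); auto; try lia.
     rewrite <- lsum_scal. rewrite (lsum_shift _ (-a) (-5*A) (5*A)). symmetry.
     rewrite (lsum_ext _ (fun c => f a * g (c - a)%Z * h (j - c)%Z)).
     2:{ intros c _. replace (c + - a)%Z with (c - a)%Z by lia. replace (j - a - (c - a))%Z with (j - c)%Z by lia. ring. }
     apply lsum_win_ext. intros c Hc.
     destruct (Z_le_gt_dec (c - a) Bg); [|rewrite (hg (c - a)%Z) in Hc by lia; lra].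
     destruct (Z_le_gt_dec (j - c) Bh); [|rewrite (hh (j - c)%Z) in Hc by lia; lra]. lia.
   + rewrite (hf a) by lia. rewrite lsum_zero; [lra|]. intros; ring.
Qed.

Definition zeroS : ser := fun _ => 0.
Lemma bnd_zero B : bnd B zeroS. Proof. intros j _; reflexivity. Qed.
Lemma bnd_one : bnd 0 oneS. Proof. intros j hj. unfold oneS. destruct (Z.eqb_spec j 0); [lia|auto]. Qed.
Lemma bnd_add B f g : bnd B f -> bnd B g -> bnd B (addS f g).
Proof. intros hf hg j hj. unfold addS. rewrite hf, hg by lia. lra. Qed.
Lemma bnd_opp B f : bnd B f -> bnd B (oppS f).
Proof. intros hf j hj. unfold oppS. rewrite hf by lia. lra. Qed.
Lemma bnd_sub B f g : bnd B f -> bnd B g -> bnd B (subS f g).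
Proof. intros hf hg j hj. unfold subS. rewrite hf, hg by lia. lra. Qed.
Lemma bnd_scal B c f : bnd B f -> bnd B (scalS c f).
Proof. intros hf j hj. unfold scalS. rewrite hf by lia. lra. Qed.

Lemma mulS_one_l f B : bnd B f -> mulS oneS f = f.
Proof. intros hf. extensionality j. rewrite (mulS_win oneS f 0 B j [0%Z]); auto using bnd_one.
 - rewrite lsum_cons, lsum_nil. unfold oneS; simpl. rewrite Z.sub_0_r. lra.
 - repeat constructor. intros H; inversion H.
 - intros a Ha. unfold oneS in Ha. destruct (Z.eqb_spec a 0); [left; auto|lra]. Qed.

Lemma mulS_add_l f g h Bf Bg Bh : bnd Bf f -> bnd Bg g -> bnd Bh h ->
  mulS (addS f g) h = addS (mulS f h) (mulS g h).
Proof. intros hf hg hh. extensionality j. unfold addS at 2.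
 set (B := Z.max Bf Bg).
 assert (hf' : bnd B f) by (apply (bnd_mono Bf); [lia|auto]).
 assert (hg' : bnd B g) by (apply (bnd_mono Bg); [lia|auto]).
 rewrite (mulS_W _ h B Bh j (j - Bh) B), (mulS_W f h B Bh j (j - Bh) B), (mulS_W g h B Bh j (j - Bh) B);
  auto using bnd_add; try lia.
 rewrite <- lsum_plus. apply lsum_ext. intros; unfold addS; ring. Qed.

Definition BS := {f : ser | exists B, bnd B f}.
Definition val (a : BS) : ser := proj1_sig a.
Lemma bs_ext (a b : BS) : val a = val b -> a = b.
Proof. destruct a, b; simpl. intros ->. f_equal. apply proof_irrelevance. Qed.

Definition bzero : BS := exist _ zeroS (ex_intro _ 0%Z (bnd_zero 0)).
Definition bone : BS := exist _ oneS (ex_intro _ 0%Z bnd_one).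
Lemma bd_add (a b : BS) : exists B, bnd B (addS (val a) (val b)).
Proof. destruct a as [f [B1 h1]], b as [g [B2 h2]]; simpl. exists (Z.max B1 B2).
 apply bnd_add; eapply bnd_mono; eauto; lia. Qed.
Definition badd (a b : BS) : BS := exist _ (addS (val a) (val b)) (bd_add a b).
Lemma bd_mul (a b : BS) : exists B, bnd B (mulS (val a) (val b)).
Proof. destruct a as [f [B1 h1]], b as [g [B2 h2]]; simpl. exists (B1 + B2)%Z. apply bnd_mul; auto. Qed.
Definition bmul (a b : BS) : BS := exist _ (mulS (val a) (val b)) (bd_mul a b).
Lemma bd_opp (a : BS) : exists B, bnd B (oppS (val a)).
Proof. destruct a as [f [B1 h1]]; simpl. exists B1. apply bnd_opp; auto. Qed.
Definition bopp (a : BS) : BS := exist _ (oppS (val a)) (bd_opp a).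
Definition bsub (a b : BS) : BS := badd a (bopp b).

Lemma BS_ring : ring_theory bzero bone badd bmul bsub bopp (@eq BS).
Proof. constructor; intros; apply bs_ext; simpl.
 - extensionality j. unfold addS, zeroS. lra.
 - extensionality j. unfold addS. lra.
 - extensionality j. unfold addS. lra.
 - destruct x as [f [B h]]. simpl. eapply mulS_one_l; eauto.
 - destruct x as [f [B1 h1]], y as [g [B2 h2]]. simpl. eapply mulS_comm_b; eauto.
 - destruct x as [f [B1 h1]], y as [g [B2 h2]], z as [h [B3 h3]]. simpl. symmetry. eapply mulS_assoc_b; eauto.
 - destruct x as [f [B1 h1]], y as [g [B2 h2]], z as [h [B3 h3]]. simpl. eapply mulS_add_l; eauto.
 - reflexivity.
 - extensionality j. unfold addS, oppS, zeroS. lra.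
Qed.
Add Ring BSr : BS_ring.

Lemma test (a b : BS) : bmul (badd a b) (badd a b) = badd (bmul a a) (badd (bmul a b) (badd (bmul b a) (bmul b b))).
Proof. ring. Qed.

Lemma Series_win (a : nat -> R) (K : Z) : (0 <= K)%Z -> (forall n, (K < Z.of_nat n)%Z -> a n = 0) ->
  Series a = lsum (fun z => a (Z.to_nat z)) (win 0 K).
Proof. intros h0 H. rewrite (Series_fin _ (Z.to_nat K)) by (intros; apply H; lia).
 rewrite (sum_n_ext _ (fun n => (fun z => a (Z.to_nat z)) (Z.of_nat n))) by (intros; rewrite Nat2Z.id; auto).
 rewrite (sum_n_lsum (fun z => a (Z.to_nat z)) Z.of_nat). apply lsum_indep; [apply inj_map_NoDup; [intros; lia|apply seq_NoDup]|apply win_NoDup|].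
 intros z _. rewrite in_map_iff, win_In. split.
 - intros [n [<- Hn]]. apply in_seq in Hn. lia.
 - intros Hz. exists (Z.to_nat z). split; [lia|]. apply in_seq; lia. Qed.

Lemma lsum_map_ext {T} F G (h1 h2 : T -> Z) l : (forall i, In i l -> F (h1 i) = G (h2 i)) ->
  lsum F (map h1 l) = lsum G (map h2 l).
Proof. induction l; intros H; auto. simpl map. rewrite !lsum_cons. f_equal; auto. apply H; left; auto.
 apply IHl; intros; apply H; right; auto. Qed.

Definition evz (F : nat -> ser) := forall j, exists K, forall m, (K < m)%nat -> forall j', (j <= j')%Z -> F m j' = 0.

Lemma sumS_win F j K : (0 <= K)%Z -> (forall m, (K < Z.of_nat m)%Z -> F m j = 0) ->
  sumS F j = lsum (fun z => F (Z.to_nat z) j) (win 0 K).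
Proof. intros. unfold sumS. apply Series_win; auto. Qed.

Lemma evz_K F j : evz F -> exists K, (0 <= K)%Z /\ forall m, (K < Z.of_nat m)%Z -> forall j', (j <= j')%Z -> F m j' = 0.
Proof. intros H. destruct (H j) as [K HK]. exists (Z.of_nat K). split; [lia|]. intros m hm j' hj.
 apply HK; auto. lia. Qed.

Lemma bnd_sumS B F : (forall m, bnd B (F m)) -> bnd B (sumS F).
Proof. intros H j hj. unfold sumS. rewrite (Series_win _ 0) by (auto with zarith; intros; apply H; auto).
 apply lsum_zero. intros; apply H; auto. Qed.

Lemma evz_bnd c F : (forall m, bnd (c - Z.of_nat m) (F m)) -> evz F.
Proof. intros H j. exists (Z.to_nat (c - j)). intros m hm j' hj. apply H. lia. Qed.

Lemma evz_fin K F : (forall m, (K < m)%nat -> forall j, F m j = 0) -> evz F.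
Proof. intros H j. exists K. intros m hm j' _. apply H; auto. Qed.

Ltac sw K := apply sumS_win; [lia|]; intros ? ?.

Lemma sumS_add F G : evz F -> evz G -> addS (sumS F) (sumS G) = sumS (fun m => addS (F m) (G m)).
Proof. intros hF hG. extensionality j. destruct (evz_K F j hF) as [K1 [h1 H1]], (evz_K G j hG) as [K2 [h2 H2]].
 unfold addS at 1.
 rewrite (sumS_win F j (Z.max K1 K2)), (sumS_win G j (Z.max K1 K2)), (sumS_win _ j (Z.max K1 K2)); try lia.
 - rewrite <- lsum_plus. reflexivity.
 - intros m hm. unfold addS. rewrite H1, H2; try lia. lra.
 - intros m hm. apply H2; lia.
 - intros m hm. apply H1; lia.
Qed.

Lemma sumS_opp F : oppS (sumS F) = sumS (fun m => oppS (F m)).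
Proof. extensionality j. unfold oppS, sumS. rewrite Series_opp. reflexivity. Qed.
Lemma sumS_scal c F : scalS c (sumS F) = sumS (fun m => scalS c (F m)).
Proof. extensionality j. unfold scalS, sumS. rewrite Series_scal_l. reflexivity. Qed.
Lemma sumS_zero : sumS (fun _ => zeroS) = zeroS.
Proof. extensionality j. rewrite (sumS_win _ j 0) by (try lia; reflexivity). apply lsum_zero. reflexivity. Qed.
Lemma sumS_ext F G : (forall m, F m = G m) -> sumS F = sumS G.
Proof. intros H. unfold sumS. extensionality j. f_equal. extensionality m. rewrite H; auto. Qed.

Lemma sumS_shift F : evz F -> sumS F = addS (F 0%nat) (sumS (fun m => F (S m))).
Proof. intros hF. extensionality j. destruct (evz_K F j hF) as [K [h0 H]]. unfold addS.
 rewrite (sumS_win F j (K + 1)), (sumS_win _ j K); try lia.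
 - unfold win. replace (Z.to_nat (K + 1 - 0 + 1)) with (S (Z.to_nat (K - 0 + 1))) by lia.
   unfold zr. set (n := Z.to_nat (K - 0 + 1)).
   replace (seq 0 (S n)) with (0%nat :: map S (seq 0 n)) by (simpl; rewrite seq_shift; reflexivity).
   simpl (map _ (_ :: _)). rewrite lsum_cons. f_equal. rewrite map_map. apply lsum_map_ext.
   intros i _. f_equal. lia.
 - intros m hm. apply H; lia.
 - intros m hm. apply H; lia.
Qed.

Lemma mulS_sumS f Bf F B : bnd Bf f -> evz F -> (forall m, bnd B (F m)) ->
  mulS f (sumS F) = sumS (fun m => mulS f (F m)).
Proof. intros hf hF hB. extensionality j. destruct (evz_K F (j - Bf) hF) as [K [h0 H]].
 rewrite (mulS_W f _ Bf B j (j - B) Bf hf (bnd_sumS _ _ hB)) by lia.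
 rewrite (sumS_win _ j K h0).
 2:{ intros m hm. rewrite (mulS_W f _ Bf B j (j - B) Bf hf (hB m)) by lia. apply lsum_zero.
     intros a Ha. apply win_In in Ha. rewrite (H m hm) by lia. ring. }
 transitivity (lsum (fun a => lsum (fun z => f a * F (Z.to_nat z) (j - a)%Z) (win 0 K)) (win (j - B) Bf)).
 - apply lsum_ext. intros a Ha. apply win_In in Ha. rewrite (sumS_win _ _ K h0).
   + symmetry; apply lsum_scal.
   + intros m hm. apply H; auto; lia.
 - rewrite lsum_swap. apply lsum_ext. intros z _. rewrite (mulS_W f _ Bf B j (j - B) Bf hf (hB _)) by lia.
   reflexivity.
Qed.

Definition mkB (f : ser) (B : Z) (h : bnd B f) : BS := exist (fun f => exists B, bnd B f) f (ex_intro (fun B => bnd B f) B h).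

Lemma bnd_shift B d f : bnd B f -> bnd (B + d) (shiftS d f).
Proof. intros h j hj. unfold shiftS. apply h. lia. Qed.

Lemma mulS_shift_l d f g Bf Bg : bnd Bf f -> bnd Bg g -> mulS (shiftS d f) g = shiftS d (mulS f g).
Proof. intros hf hg. extensionality j. unfold shiftS at 2.
 rewrite (mulS_W _ g (Bf + d) Bg j (j - Bg) (Bf + d)); auto using bnd_shift; try lia.
 rewrite (mulS_W f g Bf Bg (j - d) (j - Bg - d) Bf); auto; try lia.
 rewrite (lsum_shift _ d). replace (j - Bg - d)%Z with (j - Bg - d)%Z by lia. replace (Bf + d - d)%Z with Bf by lia.
 apply lsum_ext. intros a _. unfold shiftS. replace (a + d - d)%Z with a by lia.
 replace (j - (a + d))%Z with (j - d - a)%Z by lia. reflexivity. Qed.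

Lemma mulS_shift_r d f g Bf Bg : bnd Bf f -> bnd Bg g -> mulS f (shiftS d g) = shiftS d (mulS f g).
Proof. intros hf hg. rewrite (mulS_comm_b f _ Bf (Bg + d)); auto using bnd_shift.
 rewrite (mulS_shift_l d g f Bg Bf); auto. rewrite (mulS_comm_b g f Bg Bf); auto. Qed.

Lemma shift_shift a b f : shiftS a (shiftS b f) = shiftS (a + b) f.
Proof. extensionality j. unfold shiftS. f_equal. lia. Qed.
Lemma shift0 f : shiftS 0 f = f.
Proof. extensionality j. unfold shiftS. f_equal. lia. Qed.
Lemma kS_shift : kS = shiftS 1 oneS.
Proof. extensionality j. unfold kS, shiftS, oneS. destruct (Z.eqb_spec j 1), (Z.eqb_spec (j - 1) 0); auto; lia. Qed.

Lemma bnd_pow B f n : bnd B f -> bnd (Z.of_nat n * B) (powS f n).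
Proof. intros h. induction n.
 - apply bnd_one.
 - change (powS f (S n)) with (mulS f (powS f n)). replace (Z.of_nat (S n) * B)%Z with (B + Z.of_nat n * B)%Z by lia. apply bnd_mul; auto. Qed.

Lemma pow_lead B f n : bnd B f -> f B = 1 -> powS f n (Z.of_nat n * B)%Z = 1.
Proof. intros h h1. induction n.
 - reflexivity.
 - change (powS f (S n)) with (mulS f (powS f n)).
   replace (Z.of_nat (S n) * B)%Z with (B + Z.of_nat n * B)%Z by lia. rewrite (mul_lead B); auto.
   rewrite h1, IHn. ring. apply bnd_pow; auto. Qed.

Definition Lshape (L : ser) := bnd 1 L /\ L 1%Z = 1 /\ L 0%Z = 0.

Definition wS (L : ser) := shiftS (-1) (subS L kS).
Lemma bnd_w L : Lshape L -> bnd (-2) (wS L).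
Proof. intros [h [h1 h0]] j hj. unfold wS, shiftS, subS, kS.
 destruct (Z.eqb_spec (j - -1) 1); [replace (j - -1)%Z with 1%Z by lia; rewrite h1; ring|].
 destruct (Z.eq_dec (j - -1) 0); [rewrite e, h0; ring|]. rewrite h by lia. ring. Qed.

Lemma L_decomp L : shiftS 1 (addS oneS (wS L)) = L.
Proof. extensionality j. unfold wS, shiftS, addS, subS. rewrite kS_shift. unfold shiftS.
 replace (j - 1 - -1)%Z with j by lia. ring. Qed.

Definition Sgeo (L : ser) := sumS (fun m => powS (oppS (wS L)) m).

Lemma bnd_geo_m L m : Lshape L -> bnd (- Z.of_nat m) (powS (oppS (wS L)) m).
Proof. intros hL. eapply bnd_mono; [|apply bnd_pow; apply bnd_opp; apply bnd_w; auto]. lia. Qed.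
Lemma evz_geo L : Lshape L -> evz (fun m => powS (oppS (wS L)) m).
Proof. intros hL. apply (evz_bnd 0). intros m. eapply bnd_mono; [|apply bnd_geo_m; auto]. lia. Qed.
Lemma bnd0_geo L m : Lshape L -> bnd 0 (powS (oppS (wS L)) m).
Proof. intros hL. eapply bnd_mono; [|apply bnd_geo_m; eauto]. lia. Qed.
Lemma bnd_Sgeo L : Lshape L -> bnd 0 (Sgeo L).
Proof. intros hL. apply bnd_sumS. intros; apply bnd0_geo; auto. Qed.

Lemma Sgeo_eq L : Lshape L -> Sgeo L = addS oneS (mulS (oppS (wS L)) (Sgeo L)).
Proof. intros hL. unfold Sgeo at 1. rewrite sumS_shift by (apply evz_geo; auto). simpl powS.
 f_equal. unfold Sgeo. rewrite (mulS_sumS _ (-2) _ 0); auto.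
 - apply bnd_opp, bnd_w; auto.
 - apply evz_geo; auto.
 - intros; apply bnd0_geo; auto. Qed.

Lemma invS_bnd L : Lshape L -> bnd (-1) (invS L).
Proof. intros hL. unfold invS. fold (wS L). fold (Sgeo L). apply (bnd_shift 0). apply bnd_Sgeo; auto. Qed.

Lemma invS_spec L : Lshape L -> mulS L (invS L) = oneS.
Proof. intros hL. unfold invS. fold (wS L). fold (Sgeo L).
 pose proof (bnd_w L hL) as hw. pose proof (bnd_Sgeo L hL) as hS.
 rewrite <- (L_decomp L) at 1.
 assert (hA : bnd 0 (addS oneS (wS L))) by (apply bnd_add; auto using bnd_one; eapply bnd_mono; eauto; lia).
 rewrite (mulS_shift_l 1 _ _ 0 (0 + -1)); auto using bnd_shift.
 rewrite (mulS_shift_r (-1) _ _ 0 0); auto. rewrite shift_shift, shift0.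
 set (a := mkB _ _ hw). set (S := mkB _ _ hS).
 assert (E : S = badd bone (bmul (bopp a) S)) by (apply bs_ext; simpl; apply Sgeo_eq; auto).
 assert (E2 : bmul (badd bone a) S = bone).
 { transitivity (badd S (bmul a S)); [ring|]. rewrite E at 1. ring. }
 apply (f_equal val) in E2. exact E2.
Qed.

Lemma mulS_scal_l c f g Bf Bg : bnd Bf f -> bnd Bg g -> mulS (scalS c f) g = scalS c (mulS f g).
Proof. intros hf hg. extensionality j. unfold scalS at 2.
 rewrite (mulS_W _ g Bf Bg j (j - Bg) Bf), (mulS_W f g Bf Bg j (j - Bg) Bf); auto using bnd_scal; try lia.
 rewrite <- lsum_scal. apply lsum_ext. intros; unfold scalS; ring. Qed.

Definition cst (c : R) := scalS c oneS.
Lemma bnd_cst c : bnd 0 (cst c). Proof. apply bnd_scal, bnd_one. Qed.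
Definition bc (c : R) : BS := mkB _ _ (bnd_cst c).
Lemma scal_mul c f B : bnd B f -> scalS c f = mulS (cst c) f.
Proof. intros h. unfold cst. rewrite (mulS_scal_l c oneS f 0 B); auto using bnd_one. rewrite (mulS_one_l f B); auto. Qed.
Lemma bc_add a b : badd (bc a) (bc b) = bc (a + b).
Proof. apply bs_ext; simpl. extensionality j. unfold addS, cst, scalS. ring. Qed.
Lemma bc_mul a b : bmul (bc a) (bc b) = bc (a * b).
Proof. apply bs_ext; simpl. unfold cst at 1. rewrite (mulS_scal_l a oneS _ 0 0); auto using bnd_one, bnd_cst.
 rewrite (mulS_one_l _ 0) by apply bnd_cst. extensionality j. unfold cst, scalS. ring. Qed.
Lemma bc_one : bc 1 = bone. Proof. apply bs_ext; simpl. extensionality j. unfold cst, scalS. ring. Qed.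
Lemma bc_zero : bc 0 = bzero. Proof. apply bs_ext; simpl. extensionality j. unfold cst, scalS, zeroS. ring. Qed.
Lemma bc_opp a : bopp (bc a) = bc (- a). Proof. apply bs_ext; simpl. extensionality j. unfold oppS, cst, scalS. ring. Qed.

Lemma bnd_dk B f : bnd B f -> bnd (B - 1) (dkS f).
Proof. intros h j hj. unfold dkS. rewrite h by lia. ring. Qed.
Lemma dk_add f g : dkS (addS f g) = addS (dkS f) (dkS g).
Proof. extensionality j. unfold dkS, addS. ring. Qed.
Lemma dk_opp f : dkS (oppS f) = oppS (dkS f).
Proof. extensionality j. unfold dkS, oppS. ring. Qed.
Lemma dk_sub f g : dkS (subS f g) = subS (dkS f) (dkS g).
Proof. extensionality j. unfold dkS, subS. ring. Qed.
Lemma dk_scal c f : dkS (scalS c f) = scalS c (dkS f).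
Proof. extensionality j. unfold dkS, scalS. ring. Qed.
Lemma dk_one : dkS oneS = zeroS.
Proof. extensionality j. unfold dkS, oneS, zeroS. destruct (Z.eqb_spec (j + 1) 0).
 - rewrite e. simpl. ring. - ring. Qed.
Lemma dk_cst c : dkS (cst c) = zeroS.
Proof. unfold cst. rewrite dk_scal, dk_one. extensionality j. unfold scalS, zeroS. ring. Qed.
Lemma dk_sumS F : dkS (sumS F) = sumS (fun m => dkS (F m)).
Proof. extensionality j. unfold dkS, sumS. rewrite Series_scal_l. reflexivity. Qed.

Lemma dk_mul f g Bf Bg : bnd Bf f -> bnd Bg g ->
  dkS (mulS f g) = addS (mulS (dkS f) g) (mulS f (dkS g)).
Proof. intros hf hg. extensionality j. unfold addS. unfold dkS at 1.
 rewrite (mulS_W f g Bf Bg (j + 1) (j + 1 - Bg) Bf); auto; try lia.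
 rewrite (mulS_W (dkS f) g (Bf - 1) Bg j (j - Bg) (Bf - 1)); auto using bnd_dk; try lia.
 rewrite (mulS_W f (dkS g) Bf (Bg - 1) j (j + 1 - Bg) Bf); auto using bnd_dk; try lia.
 rewrite (lsum_shift _ (-1) (j - Bg) (Bf - 1)).
 replace (j - Bg - -1)%Z with (j + 1 - Bg)%Z by lia. replace (Bf - 1 - -1)%Z with Bf by lia.
 rewrite <- lsum_plus, <- lsum_scal. apply lsum_ext. intros a _. unfold dkS.
 replace (a + -1 + 1)%Z with a by lia. replace (j - (a + -1))%Z with (j + 1 - a)%Z by lia.
 replace (j - a + 1)%Z with (j + 1 - a)%Z by lia. rewrite !plus_IZR, minus_IZR, plus_IZR. ring. Qed.

Ltac bsexact E := exact (f_equal val E).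

Lemma dk_pow f B n : bnd B f ->
  dkS (powS f (S n)) = mulS (cst (INR (S n))) (mulS (powS f n) (dkS f)).
Proof. intros hf. induction n.
 - change (powS f 1) with (mulS f oneS). change (powS f 0) with oneS.
   rewrite (dk_mul f oneS B 0); auto using bnd_one. rewrite dk_one.
   set (a := mkB _ _ hf). set (d := mkB _ _ (bnd_dk _ _ hf)).
   assert (E : badd (bmul d bone) (bmul a bzero) = bmul (bc (INR 1)) (bmul bone d)).
   { simpl INR. rewrite bc_one. ring. }
   bsexact E.
 - change (powS f (S (S n))) with (mulS f (powS f (S n))).
   rewrite (dk_mul f (powS f (S n)) B (Z.of_nat (S n) * B)); auto using bnd_pow. rewrite IHn.
   set (a := mkB _ _ hf). set (d := mkB _ _ (bnd_dk _ _ hf)). set (p := mkB _ _ (bnd_pow _ _ n hf)).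
   assert (E : badd (bmul d (bmul a p)) (bmul a (bmul (bc (INR (S n))) (bmul p d)))
              = bmul (bc (INR (S (S n)))) (bmul (bmul a p) d)).
   { rewrite (S_INR (S n)), <- bc_add, bc_one. ring. }
   bsexact E.
Qed.

Lemma dk_inv L : Lshape L -> dkS (invS L) = oppS (mulS (mulS (invS L) (invS L)) (dkS L)).
Proof. intros hL. pose proof (invS_spec L hL) as H0.
 pose proof (invS_bnd L hL) as hi. destruct hL as [hb h1].
 assert (H1 : addS (mulS (dkS L) (invS L)) (mulS L (dkS (invS L))) = zeroS).
 { rewrite <- (dk_mul L (invS L) 1 (-1)); auto. rewrite H0, dk_one. reflexivity. }
 set (l := mkB _ _ hb). set (i := mkB _ _ hi). set (dl := mkB _ _ (bnd_dk _ _ hb)). set (di := mkB _ _ (bnd_dk _ _ hi)).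
 assert (E0 : bmul l i = bone) by (apply bs_ext; exact H0).
 assert (E1 : badd (bmul dl i) (bmul l di) = bzero) by (apply bs_ext; exact H1).
 assert (E : di = bopp (bmul (bmul i i) dl)).
 { transitivity (bmul di (bmul l i)); [rewrite E0; ring|].
   transitivity (bmul i (bmul l di)); [ring|].
   replace (bmul l di) with (bsub bzero (bmul dl i)) by (rewrite <- E1; ring). ring. }
 bsexact E.
Qed.

Lemma zpow_nat L n : zpowS L (Z.of_nat n) = powS L n.
Proof. destruct n; [reflexivity|]. simpl. rewrite SuccNat2Pos.id_succ. reflexivity. Qed.
Lemma zpow_neg L n : zpowS L (- Z.of_nat n) = powS (invS L) n.
Proof. destruct n; [reflexivity|]. simpl. rewrite SuccNat2Pos.id_succ. reflexivity. Qed.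

Lemma bnd_zpow L z : Lshape L -> bnd z (zpowS L z).
Proof. intros hL. destruct (Z_le_gt_dec 0 z).
 - rewrite <- (Z2Nat.id z) by lia. rewrite zpow_nat. eapply bnd_mono; [|apply bnd_pow, hL]. lia.
 - replace z with (- Z.of_nat (Z.to_nat (- z)))%Z by lia. rewrite zpow_neg.
   eapply bnd_mono; [|apply bnd_pow, invS_bnd, hL]. lia. Qed.

Lemma dk_zpow L z : Lshape L ->
  dkS (zpowS L z) = mulS (cst (IZR z)) (mulS (zpowS L (z - 1)) (dkS L)).
Proof. intros hL. pose proof hL as [hb _].
 destruct (Z_lt_le_dec 0 z) as [hz|hz].
 - replace z with (Z.of_nat (S (Z.to_nat (z - 1)))) by lia. rewrite zpow_nat.
   replace (Z.of_nat (S (Z.to_nat (z - 1))) - 1)%Z with (Z.of_nat (Z.to_nat (z - 1))) by lia. rewrite zpow_nat.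
   rewrite <- INR_IZR_INZ. apply (dk_pow L 1); auto.
 - destruct (Z.eq_dec z 0) as [->|hz0].
   + change (zpowS L 0) with oneS. rewrite dk_one.
     set (a := mkB _ _ (bnd_zpow L (0 - 1) hL)). set (d := mkB _ _ (bnd_dk _ _ hb)).
     assert (E : bzero = bmul (bc (IZR 0)) (bmul a d)) by (rewrite bc_zero; ring). bsexact E.
   + set (m := Z.to_nat (- z - 1)).
     replace z with (- Z.of_nat (S m))%Z by lia. rewrite zpow_neg.
     replace (- Z.of_nat (S m) - 1)%Z with (- Z.of_nat (S (S m)))%Z by lia. rewrite zpow_neg.
     pose proof (invS_bnd L hL) as hi.
     rewrite (dk_pow _ (-1) m hi), (dk_inv L hL).
     change (powS (invS L) (S (S m))) with (mulS (invS L) (mulS (invS L) (powS (invS L) m))).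
     set (i := mkB _ _ hi). set (d := mkB _ _ (bnd_dk _ _ hb)). set (p := mkB _ _ (bnd_pow _ _ m hi)).
     assert (E : bmul (bc (INR (S m))) (bmul p (bopp (bmul (bmul i i) d)))
                 = bmul (bc (IZR (- Z.of_nat (S m)))) (bmul (bmul i (bmul i p)) d)).
     { rewrite opp_IZR, <- INR_IZR_INZ, <- bc_opp. ring. }
     bsexact E.
Qed.

Definition efam (G : ser) := fun j => scalS (/ INR (fact j)) (powS G j).
Lemma bnd_efam G m : bnd (-1) G -> bnd (- Z.of_nat m) (efam G m).
Proof. intros h. apply bnd_scal. eapply bnd_mono; [|apply bnd_pow; eauto]. lia. Qed.
Lemma evz_efam G : bnd (-1) G -> evz (efam G).
Proof. intros h. apply (evz_bnd 0). intros m. eapply bnd_mono; [|apply bnd_efam; auto]. lia. Qed.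
Lemma bnd_exp G : bnd (-1) G -> bnd 0 (expS G).
Proof. intros h. apply bnd_sumS. intros m. eapply bnd_mono; [|apply bnd_efam; eauto]. lia. Qed.
Lemma exp_lead G : bnd (-1) G -> expS G 0%Z = 1.
Proof. intros h. unfold expS. fold (efam G). rewrite (sumS_win _ 0 0); try lia.
 - rewrite lsum_win1. unfold efam, scalS. simpl. unfold oneS. simpl. field.
 - intros m hm. apply bnd_efam; auto. lia. Qed.

Lemma addS_zero_l f : addS zeroS f = f. Proof. extensionality j. unfold addS, zeroS. ring. Qed.

Lemma dk_exp G : bnd (-1) G -> dkS (expS G) = mulS (expS G) (dkS G).
Proof. intros h. unfold expS. fold (efam G). rewrite dk_sumS.
 rewrite sumS_shift.
 2:{ apply (evz_bnd (-1)). intros m. unfold efam. rewrite dk_scal. apply bnd_scal.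
     eapply bnd_mono; [|apply bnd_dk, bnd_pow; eauto]. lia. }
 unfold efam at 1. rewrite dk_scal. change (powS G 0) with oneS. rewrite dk_one.
 replace (scalS (/ INR (fact 0)) zeroS) with zeroS by (extensionality j; unfold scalS, zeroS; ring).
 rewrite addS_zero_l.
 rewrite (mulS_comm_b _ _ 0 (-1 - 1)); [|apply bnd_exp; auto|apply bnd_dk; auto].
 unfold expS. fold (efam G).
 rewrite (mulS_sumS _ (-1 - 1) _ 0); [|apply bnd_dk; auto|apply evz_efam; auto|].
 2:{ intros m. eapply bnd_mono; [|apply bnd_efam; eauto]. lia. }
 apply sumS_ext. intros m. unfold efam. rewrite dk_scal, (dk_pow G (-1) m h).
 pose proof (bnd_pow _ _ m h) as hp. pose proof (bnd_dk _ _ h) as hd.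
 rewrite (scal_mul _ _ _ (bnd_mul _ _ _ _ (bnd_cst _) (bnd_mul _ _ _ _ hp hd))).
 rewrite (scal_mul _ _ _ hp).
 set (p := mkB _ _ hp). set (d := mkB _ _ hd).
 assert (E : bmul (bc (/ INR (fact (S m)))) (bmul (bc (INR (S m))) (bmul p d))
             = bmul d (bmul (bc (/ INR (fact m))) p)).
 { transitivity (bmul (bmul (bc (/ INR (fact (S m)))) (bc (INR (S m)))) (bmul p d)); [ring|].
   rewrite bc_mul. replace (/ INR (fact (S m)) * INR (S m)) with (/ INR (fact m)). ring.
   rewrite fact_simpl, mult_INR. field. split; [apply INR_fact_neq_0|apply not_0_INR; lia]. }
 bsexact E.
Qed.

Lemma isd_plus (f g : R -> R) x a b : is_derive f x a -> is_derive g x b -> is_derive (fun y => f y + g y) x (a + b).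
Proof. intros. apply (is_derive_plus f g x a b); auto. Qed.
Lemma isd_mult (f g : R -> R) x a b : is_derive f x a -> is_derive g x b -> is_derive (fun y => f y * g y) x (a * g x + f x * b).
Proof. intros. apply (is_derive_mult f g x a b); auto. intros; apply Rmult_comm. Qed.
Lemma isd_opp (f : R -> R) x a : is_derive f x a -> is_derive (fun y => - f y) x (- a).
Proof. intros. apply (is_derive_opp f x a); auto. Qed.
Lemma isd_const (c : R) x : is_derive (fun _ => c) x 0.
Proof. apply (is_derive_const c x). Qed.
Lemma isd_ext (f g : R -> R) x a : (forall y, f y = g y) -> is_derive f x a -> is_derive g x a.
Proof. intros H. apply is_derive_ext; auto. Qed.
Lemma isd_unique (f : R -> R) x a b : is_derive f x a -> is_derive f x b -> a = b.
Proof. intros H1 H2. apply is_derive_unique in H1. apply is_derive_unique in H2. congruence. Qed.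

Lemma isd_lsum (G : R -> Z -> R) G' l x : (forall a, is_derive (fun y => G y a) x (G' a)) ->
  is_derive (fun y => lsum (G y) l) x (lsum G' l).
Proof. intros H. induction l.
 - apply (isd_ext (fun _ => 0)); [reflexivity|apply isd_const].
 - apply (isd_ext (fun y => G y a + lsum (G y) l)); [intros; reflexivity|]. apply isd_plus; auto. Qed.

Section Dv.
Variable s0 : R.

Definition Dv (F : R -> ser) (F' : ser) :=
  (exists B, forall y, bnd B (F y)) /\ forall j, is_derive (fun y => F y j) s0 (F' j).

Lemma Dv_bnd F F' B : (forall y, bnd B (F y)) -> (forall j, is_derive (fun y => F y j) s0 (F' j)) -> bnd B F'.
Proof. intros hB hD j hj. apply (isd_unique (fun y => F y j) s0); auto.
 apply (isd_ext (fun _ => 0)); [intros; symmetry; apply hB; auto|apply isd_const]. Qed.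

Lemma Dv_bnd' F F' : Dv F F' -> exists B, bnd B F' /\ forall y, bnd B (F y).
Proof. intros [[B hB] hD]. exists B. split; auto. eapply Dv_bnd; eauto. Qed.

Lemma Dv_unique F A B : Dv F A -> Dv F B -> A = B.
Proof. intros [_ h1] [_ h2]. extensionality j. eapply isd_unique; eauto. Qed.

Lemma Dv_ext F G A : (forall y, F y = G y) -> Dv F A -> Dv G A.
Proof. intros H [[B hB] hD]. split. exists B. intros y; rewrite <- H; auto.
 intros j. apply (isd_ext (fun y => F y j)); auto. intros; rewrite H; auto. Qed.

Lemma Dv_eq F A B : A = B -> Dv F A -> Dv F B.
Proof. intros ->; auto. Qed.

Lemma Dv_const f B : bnd B f -> Dv (fun _ => f) zeroS.
Proof. intros h. split; [exists B; auto|]. intros j. apply isd_const. Qed.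

Lemma Dv_add F F' G G' : Dv F F' -> Dv G G' -> Dv (fun y => addS (F y) (G y)) (addS F' G').
Proof. intros [[B1 h1] d1] [[B2 h2] d2]. split.
 - exists (Z.max B1 B2). intros y. apply bnd_add; eapply bnd_mono; eauto; lia.
 - intros j. unfold addS. apply isd_plus; auto. Qed.

Lemma Dv_opp F F' : Dv F F' -> Dv (fun y => oppS (F y)) (oppS F').
Proof. intros [[B1 h1] d1]. split.
 - exists B1. intros y. apply bnd_opp; auto.
 - intros j. unfold oppS. apply isd_opp; auto. Qed.

Lemma Dv_sub F F' G G' : Dv F F' -> Dv G G' -> Dv (fun y => subS (F y) (G y)) (subS F' G').
Proof. intros [[B1 h1] d1] [[B2 h2] d2]. split.
 - exists (Z.max B1 B2). intros y. apply bnd_sub; eapply bnd_mono; eauto; lia.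
 - intros j. unfold subS. apply (isd_ext (fun y => F y j + - G y j)); [intros; ring|].
   replace (F' j - G' j) with (F' j + - G' j) by ring. apply isd_plus; auto. apply isd_opp; auto. Qed.

Lemma Dv_scalf (c : R -> R) c' F F' : is_derive c s0 c' -> Dv F F' ->
  Dv (fun y => scalS (c y) (F y)) (addS (scalS c' (F s0)) (scalS (c s0) F')).
Proof. intros hc [[B1 h1] d1]. split.
 - exists B1. intros y. apply bnd_scal; auto.
 - intros j. unfold scalS, addS. apply (isd_mult c (fun y => F y j)); auto. Qed.

Lemma Dv_scal c F F' : Dv F F' -> Dv (fun y => scalS c (F y)) (scalS c F').
Proof. intros H. eapply Dv_eq; [|apply (Dv_scalf (fun _ => c) 0); [apply isd_const|exact H]].
 extensionality j. unfold addS, scalS. ring. Qed.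

Lemma Dv_shift d F F' : Dv F F' -> Dv (fun y => shiftS d (F y)) (shiftS d F').
Proof. intros [[B1 h1] d1]. split.
 - exists (B1 + d)%Z. intros y. apply bnd_shift; auto.
 - intros j. unfold shiftS. apply d1. Qed.

Lemma Dv_mul F F' G G' : Dv F F' -> Dv G G' ->
  Dv (fun y => mulS (F y) (G y)) (addS (mulS F' (G s0)) (mulS (F s0) G')).
Proof. intros [[B1 h1] d1] [[B2 h2] d2].
 pose proof (Dv_bnd F F' B1 h1 d1) as h1'. pose proof (Dv_bnd G G' B2 h2 d2) as h2'. split.
 - exists (B1 + B2)%Z. intros y. apply bnd_mul; auto.
 - intros j. unfold addS.
   apply (isd_ext (fun y => lsum (fun a => F y a * G y (j - a)%Z) (win (j - B2) B1))).
   { intros y. rewrite (mulS_W _ _ B1 B2 j (j - B2) B1); auto; lia. }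
   rewrite (mulS_W _ _ B1 B2 j (j - B2) B1), (mulS_W _ _ B1 B2 j (j - B2) B1); auto; try lia.
   rewrite <- lsum_plus. apply isd_lsum. intros a. apply isd_mult; auto. Qed.

Lemma Dv_sumS (F : nat -> R -> ser) F' B :
  (forall m, Dv (F m) (F' m)) -> (forall m y, bnd B (F m y)) ->
  (forall j, exists K, forall m, (K < m)%nat -> forall y j', (j <= j')%Z -> F m y j' = 0) ->
  Dv (fun y => sumS (fun m => F m y)) (sumS F').
Proof. intros hD hB hE. split.
 - exists B. intros y. apply bnd_sumS. auto.
 - intros j. destruct (hE j) as [K HK].
   assert (HK' : forall m, (Z.of_nat K < Z.of_nat m)%Z -> F' m j = 0).
   { intros m hm. destruct (hD m) as [_ d]. apply (isd_unique (fun y => F m y j) s0); auto.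
     apply (isd_ext (fun _ => 0)); [intros; symmetry; apply HK; auto; lia|apply isd_const]. }
   apply (isd_ext (fun y => lsum (fun z => F (Z.to_nat z) y j) (win 0 (Z.of_nat K)))).
   { intros y. symmetry. apply sumS_win; [lia|]. intros m hm. apply HK; auto; lia. }
   rewrite (sumS_win _ j (Z.of_nat K)); [|lia|]. 2:{ intros m hm. apply HK'. auto. }
   apply isd_lsum. intros a. apply hD. Qed.

End Dv.

Section K.
Variable s0 : R.

Lemma Dv_pow F F' n : Dv s0 F F' ->
  Dv s0 (fun y => powS (F y) (S n)) (mulS (cst (INR (S n))) (mulS (powS (F s0) n) F')).
Proof. intros hD. destruct (Dv_bnd' _ _ _ hD) as [B [hB' hB]]. induction n.
 - eapply Dv_eq; [|apply (Dv_mul s0 F F' (fun _ => oneS) zeroS); auto; apply (Dv_const s0 _ 0 bnd_one)].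
   set (a := mkB _ _ (hB s0)). set (d := mkB _ _ hB').
   assert (E : badd (bmul d bone) (bmul a bzero) = bmul (bc (INR 1)) (bmul bone d)).
   { simpl INR. rewrite bc_one. ring. }
   bsexact E.
 - eapply Dv_eq; [|apply (Dv_mul s0 F F' (fun y => powS (F y) (S n))); [exact hD|exact IHn]].
   change (powS (F s0) (S n)) with (mulS (F s0) (powS (F s0) n)).
   set (a := mkB _ _ (hB s0)). set (d := mkB _ _ hB'). set (p := mkB _ _ (bnd_pow _ _ n (hB s0))).
   assert (E : badd (bmul d (bmul a p)) (bmul a (bmul (bc (INR (S n))) (bmul p d)))
              = bmul (bc (INR (S (S n)))) (bmul (bmul a p) d)).
   { rewrite (S_INR (S n)), <- bc_add, bc_one. ring. }
   bsexact E.
Qed.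

Lemma Dv_pow_ex F F' n : Dv s0 F F' -> exists D, Dv s0 (fun y => powS (F y) n) D.
Proof. intros hD. destruct n.
 - exists zeroS. apply (Dv_const s0 _ 0 bnd_one).
 - eexists. apply Dv_pow; eauto. Qed.

Lemma Dv_inv L L' : (forall y, Lshape (L y)) -> Dv s0 L L' ->
  Dv s0 (fun y => invS (L y)) (oppS (mulS (mulS (invS (L s0)) (invS (L s0))) L')).
Proof. intros hL hD. destruct (Dv_bnd' _ _ _ hD) as [B [hB' hB]].
 assert (hw : Dv s0 (fun y => wS (L y)) (shiftS (-1) (subS L' zeroS))).
 { apply Dv_shift, Dv_sub; auto. apply (Dv_const s0 _ 1). intros j hj. unfold kS. destruct (Z.eqb_spec j 1); [lia|auto]. }
 assert (hw' : Dv s0 (fun y => oppS (wS (L y))) (oppS (shiftS (-1) (subS L' zeroS)))) by (apply Dv_opp; auto).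
 assert (hex : exists I', Dv s0 (fun y => invS (L y)) I').
 { set (X' := oppS (shiftS (-1) (subS L' zeroS))).
   set (Df := fun m => match m with 0%nat => zeroS | S n => mulS (cst (INR (S n))) (mulS (powS (oppS (wS (L s0))) n) X') end).
   assert (HDf : forall m, Dv s0 (fun y => powS (oppS (wS (L y))) m) (Df m)).
   { intros [|n]. - apply (Dv_const s0 _ 0 bnd_one). - apply Dv_pow; auto. }
   exists (shiftS (-1) (sumS Df)). apply (Dv_ext s0 (fun y => shiftS (-1) (Sgeo (L y)))); [reflexivity|].
   apply Dv_shift. apply (Dv_sumS s0 (fun m y => powS (oppS (wS (L y))) m) Df 0); auto.
   - intros m y. apply bnd0_geo; auto.
   - intros j. exists (Z.to_nat (- j)). intros m hm y j' hj. apply (bnd_geo_m (L y) m); auto. lia. }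
 destruct hex as [I' hI].
 pose proof (invS_bnd _ (hL s0)) as hi. destruct (Dv_bnd' _ _ _ hI) as [Bi [hi' _]].
 assert (H0 : addS (mulS L' (invS (L s0))) (mulS (L s0) I') = zeroS).
 { eapply Dv_unique; [exact (Dv_mul s0 L L' (fun y => invS (L y)) I' hD hI)|].
   apply (Dv_ext s0 (fun _ => oneS)); [intros; symmetry; apply invS_spec; auto|apply (Dv_const s0 _ 0 bnd_one)]. }
 eapply Dv_eq; [|exact hI].
 pose proof (invS_spec _ (hL s0)) as H1.
 set (l := mkB _ _ (hB s0)). set (i := mkB _ _ hi). set (dl := mkB _ _ hB'). set (di := mkB _ _ hi').
 assert (E0 : bmul l i = bone) by (apply bs_ext; exact H1).
 assert (E1 : badd (bmul dl i) (bmul l di) = bzero) by (apply bs_ext; exact H0).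
 assert (E : di = bopp (bmul (bmul i i) dl)).
 { transitivity (bmul di (bmul l i)); [rewrite E0; ring|].
   transitivity (bmul i (bmul l di)); [ring|].
   replace (bmul l di) with (bsub bzero (bmul dl i)) by (rewrite <- E1; ring). ring. }
 bsexact E.
Qed.

Lemma Dv_zpow L L' z : (forall y, Lshape (L y)) -> Dv s0 L L' ->
  Dv s0 (fun y => zpowS (L y) z) (mulS (cst (IZR z)) (mulS (zpowS (L s0) (z - 1)) L')).
Proof. intros hL hD. destruct (Dv_bnd' _ _ _ hD) as [B [hB' hB]].
 destruct (Z_lt_le_dec 0 z) as [hz|hz].
 - replace z with (Z.of_nat (S (Z.to_nat (z - 1)))) by lia.
   replace (Z.of_nat (S (Z.to_nat (z - 1))) - 1)%Z with (Z.of_nat (Z.to_nat (z - 1))) by lia. rewrite zpow_nat.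
   rewrite <- INR_IZR_INZ. apply (Dv_ext s0 (fun y => powS (L y) (S (Z.to_nat (z - 1))))).
   { intros; rewrite zpow_nat; auto. }
   apply Dv_pow; auto.
 - destruct (Z.eq_dec z 0) as [->|hz0].
   + eapply Dv_eq; [|apply (Dv_const s0 oneS 0 bnd_one)].
     set (a := mkB _ _ (bnd_zpow (L s0) (0 - 1) (hL s0))). set (d := mkB _ _ hB').
     assert (E : bzero = bmul (bc (IZR 0)) (bmul a d)) by (rewrite bc_zero; ring). bsexact E.
   + set (m := Z.to_nat (- z - 1)).
     replace z with (- Z.of_nat (S m))%Z by lia.
     replace (- Z.of_nat (S m) - 1)%Z with (- Z.of_nat (S (S m)))%Z by lia. rewrite zpow_neg.
     apply (Dv_ext s0 (fun y => powS (invS (L y)) (S m))). { intros; rewrite zpow_neg; auto. }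
     pose proof (invS_bnd _ (hL s0)) as hi.
     eapply Dv_eq; [|apply Dv_pow; apply Dv_inv; auto].
     change (powS (invS (L s0)) (S (S m))) with (mulS (invS (L s0)) (mulS (invS (L s0)) (powS (invS (L s0)) m))).
     set (i := mkB _ _ hi). set (d := mkB _ _ hB'). set (p := mkB _ _ (bnd_pow _ _ m hi)).
     assert (E : bmul (bc (INR (S m))) (bmul p (bopp (bmul (bmul i i) d)))
                 = bmul (bc (IZR (- Z.of_nat (S m)))) (bmul (bmul i (bmul i p)) d)).
     { rewrite opp_IZR, <- INR_IZR_INZ, <- bc_opp. ring. }
     bsexact E. exact hD.
Qed.
End K.

Lemma Lshape_L u x t y : Lshape (Lfield u x t y).
Proof. unfold Lshape, Lfield. split; [|split].
 - intros j hj. destruct (Z.eqb_spec j 1); [lia|]. destruct (Z.leb_spec j (-1)); [lia|auto].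
 - reflexivity.
 - reflexivity. Qed.

Lemma bnd_P N p x t y : bnd (Z.of_nat N) (Pfield N p x t y).
Proof. intros j hj. unfold Pfield. destruct (Z.eqb_spec j (Z.of_nat N)); [lia|].
 destruct (Z.leb_spec 0 j), (Z.ltb_spec j (Z.of_nat N)); simpl; auto; lia. Qed.
Lemma P_lead N p x t y : Pfield N p x t y (Z.of_nat N) = 1.
Proof. unfold Pfield. rewrite Z.eqb_refl. reflexivity. Qed.

Lemma Derive_bnd (F : R -> ser) B x0 : (forall y, bnd B (F y)) -> bnd B (fun j => Derive (fun y => F y j) x0).
Proof. intros H j hj. replace (fun y => F y j) with (fun _ : R => 0). apply Derive_const.
 extensionality y. symmetry; apply H; auto. Qed.

Lemma Dv_Derive s0 (F : R -> ser) B : (forall y, bnd B (F y)) -> (forall j, ex_derive (fun y => F y j) s0) ->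
  Dv s0 F (fun j => Derive (fun y => F y j) s0).
Proof. intros hB hD. split; [exists B; auto|]. intros j. apply Derive_correct. auto. Qed.

Lemma Dv_L (u : nat -> coef) x t s : (forall n, regular (u n)) -> finsupp t ->
  Dv s (fun y => Lfield u x t y) (dsF (Lfield u) x t s).
Proof. intros hu ht. apply (Dv_Derive s _ 1). intros; apply Lshape_L.
 intros j. unfold Lfield. destruct (Z.eqb j 1); [apply ex_derive_const|].
 destruct (Z.leb j (-1)); [|apply ex_derive_const]. apply (hu _ x t s ht). Qed.

Lemma dsF_is (F : fser) x t s F' : Dv s (fun y => F x t y) F' -> dsF F x t s = F'.
Proof. intros [_ hd]. extensionality j. unfold dsF. apply is_derive_unique. apply hd. Qed.

Lemma evz_mul F f B Bf : evz F -> (forall n, bnd B (F n)) -> bnd Bf f -> evz (fun n => mulS (F n) f).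
Proof. intros hF hB hf j. destruct (hF (j - Bf)%Z) as [K HK]. exists K. intros m hm j' hj.
 rewrite (mulS_W _ _ B Bf j' (j' - Bf) B); auto; try lia. apply lsum_zero. intros a Ha. apply win_In in Ha.
 destruct (Z_le_gt_dec (j' - a) Bf).
 - rewrite (HK m hm) by lia. ring.
 - rewrite (hf (j' - a)%Z) by lia. ring. Qed.
Lemma evz_scal F c : evz F -> evz (fun n => scalS (c n) (F n)).
Proof. intros hF j. destruct (hF j) as [K HK]. exists K. intros m hm j' hj. unfold scalS. rewrite HK; auto. ring. Qed.
Lemma bnd_scal0 B c f : c = 0 -> bnd B (scalS c f).
Proof. intros -> j _. unfold scalS. ring. Qed.

Lemma bd_scal c (a : BS) : exists B, bnd B (scalS c (val a)).
Proof. destruct a as [f [B h]]. exists B. apply bnd_scal; auto. Qed.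
Definition bscal c (a : BS) : BS := exist _ (scalS c (val a)) (bd_scal c a).
Lemma bscal_bc c a : bscal c a = bmul (bc c) a.
Proof. apply bs_ext. destruct a as [f [B h]]. simpl. apply (scal_mul c f B h). Qed.

Lemma chain_sum (a : nat -> R) (z : nat -> Z) L0 Ls Lk B1 Bs Bk :
  Lshape L0 -> bnd Bs Ls -> bnd Bk Lk ->
  (forall n, bnd B1 (scalS (a n) (zpowS L0 (z n - 1)))) -> evz (fun n => scalS (a n) (zpowS L0 (z n - 1))) ->
  mulS Lk (sumS (fun n => scalS (a n) (mulS (cst (IZR (z n))) (mulS (zpowS L0 (z n - 1)) Ls)))) =
  mulS Ls (sumS (fun n => scalS (a n) (mulS (cst (IZR (z n))) (mulS (zpowS L0 (z n - 1)) Lk)))).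
Proof. intros hL hs hk hB hE.
 set (X := fun n => scalS (a n) (zpowS L0 (z n - 1))).
 assert (Hr : forall (D : ser) BD (hD : bnd BD D), sumS (fun n => scalS (a n) (mulS (cst (IZR (z n))) (mulS (zpowS L0 (z n - 1)) D)))
           = sumS (fun n => scalS (IZR (z n)) (mulS (X n) D))).
 { intros D BD hD. apply sumS_ext. intros n. unfold X.
   pose proof (bnd_zpow L0 (z n - 1) hL) as hz.
   set (P := mkB _ _ hz). set (d := mkB _ _ hD).
   assert (E : bscal (a n) (bmul (bc (IZR (z n))) (bmul P d)) = bscal (IZR (z n)) (bmul (bscal (a n) P) d))
     by (rewrite !bscal_bc; ring).
   bsexact E. }
 rewrite (Hr Ls Bs hs), (Hr Lk Bk hk).
 assert (hE' : forall D BD, bnd BD D -> evz (fun n => scalS (IZR (z n)) (mulS (X n) D))).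
 { intros D BD hD. apply evz_scal. apply (evz_mul _ _ B1 BD); auto. }
 rewrite (mulS_sumS Lk Bk _ (B1 + Bs)); [| exact hk | apply (hE' Ls Bs hs) | intros; apply bnd_scal, bnd_mul; [apply hB|auto]].
 rewrite (mulS_sumS Ls Bs _ (B1 + Bk)); [| exact hs | apply (hE' Lk Bk hk) | intros; apply bnd_scal, bnd_mul; [apply hB|auto]].
 apply sumS_ext. intros n.
 pose proof (hB n) as hx. fold (X n) in hx.
 set (x := mkB _ _ hx). set (s := mkB _ _ hs). set (k := mkB _ _ hk).
 assert (E : bmul k (bscal (IZR (z n)) (bmul x s)) = bmul s (bscal (IZR (z n)) (bmul x k))) by (rewrite !bscal_bc; ring).
 bsexact E.
Qed.

Section MM.
Variables (N : nat) (u v : nat -> coef) (x : R) (t : nat -> R) (s : R) (K : nat).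
Hypotheses (hu : forall n, regular (u n)) (hv : forall n, regular (v n)) (ht : finsupp t)
  (hK : forall n, (K < n)%nat -> t n = 0).

Definition Tfam x' y n := scalS (INR n * t n) (zpowS (Lfield u x' t y) (Z.of_nat n - 1)).
Definition Vfam x' y i := scalS (v (S i) x' t y) (zpowS (Lfield u x' t y) (- Z.of_nat (S i) - 1)).

Lemma M_unfold x' y : Mfield N u v x' t y = addS (sumS (Tfam x' y)) (addS (scalS x' oneS)
   (addS (scalS (INR N * y) (invS (Lfield u x' t y))) (sumS (Vfam x' y)))).
Proof. reflexivity. Qed.

Lemma bnd_Tfam x' y n : bnd (Z.of_nat K) (Tfam x' y n).
Proof. unfold Tfam. destruct (le_lt_dec n K).
 - apply bnd_scal. eapply bnd_mono; [|apply bnd_zpow, Lshape_L]. lia.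
 - apply bnd_scal0. rewrite hK; auto. ring. Qed.
Lemma bnd_Vfam x' y i : bnd (- Z.of_nat (S i) - 1) (Vfam x' y i).
Proof. unfold Vfam. apply bnd_scal. apply bnd_zpow, Lshape_L. Qed.
Lemma bnd_Vfam2 x' y i : bnd (-2) (Vfam x' y i).
Proof. eapply bnd_mono; [|apply bnd_Vfam]. lia. Qed.

Lemma bnd_M x' y : bnd (Z.of_nat K) (Mfield N u v x' t y).
Proof. rewrite M_unfold. apply bnd_add; [apply bnd_sumS; intros; apply bnd_Tfam|].
 apply bnd_add; [eapply bnd_mono; [|apply bnd_scal, bnd_one]; lia|].
 apply bnd_add; [eapply bnd_mono; [|apply bnd_scal, invS_bnd, Lshape_L]; lia|].
 apply bnd_sumS. intros. eapply bnd_mono; [|apply bnd_Vfam2]. lia. Qed.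

Let L0 := Lfield u x t s.
Let I0 := invS L0.
Let Ls := dsF (Lfield u) x t s.
Let Lk := dkS L0.
Definition zT (n : nat) := (Z.of_nat n - 1)%Z.
Definition zV (i : nat) := (- Z.of_nat (S i) - 1)%Z.
Definition vs (i : nat) := dsC (v (S i)) x t s.
Definition T'fam (D : ser) n := scalS (INR n * t n) (mulS (cst (IZR (zT n))) (mulS (zpowS L0 (zT n - 1)) D)).
Definition Afam i := scalS (vs i) (zpowS L0 (zV i)).
Definition V2fam (D : ser) i := scalS (v (S i) x t s) (mulS (cst (IZR (zV i))) (mulS (zpowS L0 (zV i - 1)) D)).

Definition Ms := addS (sumS (T'fam Ls)) (addS zeroS (addS (addS (scalS (INR N) I0)
   (scalS (INR N * s) (oppS (mulS (mulS I0 I0) Ls)))) (sumS (fun i => addS (Afam i) (V2fam Ls i))))).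
Definition Mk := addS (sumS (T'fam Lk)) (addS zeroS (addS (scalS (INR N * s) (oppS (mulS (mulS I0 I0) Lk))) (sumS (V2fam Lk)))).

Lemma Dv_M : Dv s (fun y => Mfield N u v x t y) Ms.
Proof. pose proof (Dv_L u x t s hu ht) as hL. fold Ls in hL.
 assert (hsh : forall y, Lshape (Lfield u x t y)) by (intros; apply Lshape_L).
 apply (Dv_ext s (fun y => addS (sumS (Tfam x y)) (addS (scalS x oneS)
   (addS (scalS (INR N * y) (invS (Lfield u x t y))) (sumS (Vfam x y)))))); [reflexivity|].
 apply Dv_add; [|apply Dv_add; [apply (Dv_const s _ 0), bnd_scal, bnd_one|apply Dv_add]].
 - apply (Dv_sumS s (fun m y => Tfam x y m) _ (Z.of_nat K)).
   + intros m. unfold Tfam, T'fam. apply Dv_scal. apply Dv_zpow; auto.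
   + intros; apply bnd_Tfam.
   + intros j. exists K. intros m hm y j' _. unfold Tfam, scalS. rewrite hK; auto. ring.
 - apply (Dv_scalf s (fun y => INR N * y)); [|apply Dv_inv; auto].
   auto_derive; [auto|ring].
 - apply (Dv_sumS s (fun m y => Vfam x y m) _ (-2)).
   + intros i. unfold Vfam, Afam, V2fam.
     apply (Dv_scalf s (fun y => v (S i) x t y)); [|apply Dv_zpow; auto].
     unfold vs, dsC. apply Derive_correct. apply (hv (S i) x t s ht).
   + intros; apply bnd_Vfam2.
   + intros j. exists (Z.to_nat (- j)). intros m hm y j' hj. apply bnd_Vfam. lia.
Qed.

Lemma dsF_M : dsF (Mfield N u v) x t s = Ms.
Proof. apply dsF_is. apply Dv_M. Qed.

Lemma dk_M : dkS (Mfield N u v x t s) = Mk.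
Proof. pose proof (Lshape_L u x t s) as hsh. rewrite M_unfold. unfold Mk.
 rewrite !dk_add, !dk_sumS, !dk_scal, dk_one, (dk_inv _ hsh). fold L0 I0 Lk.
 replace (scalS x zeroS) with zeroS by (extensionality j; unfold scalS, zeroS; ring).
 f_equal; [|f_equal; f_equal].
 - apply sumS_ext. intros n. unfold Tfam, T'fam. rewrite dk_scal, dk_zpow; auto.
 - apply sumS_ext. intros i. unfold Vfam, V2fam. rewrite dk_scal, dk_zpow; auto.
Qed.

Lemma bnd_Ls : bnd 1 Ls.
Proof. apply (Derive_bnd (fun y => Lfield u x t y)). intros; apply Lshape_L. Qed.
Lemma bnd_Lk : bnd 0 Lk.
Proof. apply (bnd_dk 1). apply Lshape_L. Qed.
Lemma bnd_I0 : bnd (-1) I0. Proof. apply invS_bnd, Lshape_L. Qed.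

Lemma bnd_T' D BD n : bnd BD D -> bnd (Z.of_nat K + BD) (T'fam D n).
Proof. intros hD. unfold T'fam. destruct (le_lt_dec n K).
 - apply bnd_scal. eapply bnd_mono; [|apply bnd_mul; [apply bnd_cst|apply bnd_mul; [apply bnd_zpow, Lshape_L|exact hD]]].
   unfold zT. lia.
 - apply bnd_scal0. rewrite hK; auto. ring. Qed.
Lemma bnd_V2 D BD i : bnd BD D -> bnd (- Z.of_nat i - 3 + BD) (V2fam D i).
Proof. intros hD. unfold V2fam. apply bnd_scal.
 eapply bnd_mono; [|apply bnd_mul; [apply bnd_cst|apply bnd_mul; [apply bnd_zpow, Lshape_L|exact hD]]].
 unfold zV. lia. Qed.
Lemma bnd_A i : bnd (- Z.of_nat i - 2) (Afam i).
Proof. unfold Afam. apply bnd_scal. eapply bnd_mono; [|apply bnd_zpow, Lshape_L]. unfold zV. lia. Qed.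

Lemma KEY : subS (mulS Lk Ms) (mulS Ls Mk) = mulS Lk (addS (scalS (INR N) I0) (sumS Afam)).
Proof.
 pose proof bnd_Ls as hs. pose proof bnd_Lk as hk. pose proof bnd_I0 as hi. pose proof (Lshape_L u x t s) as hsh.
 assert (hA : evz Afam) by (apply (evz_bnd (-2)); intros; eapply bnd_mono; [|apply bnd_A]; lia).
 assert (hV : forall D BD, bnd BD D -> evz (V2fam D)).
 { intros D BD hD. apply (evz_bnd (-3 + BD)). intros i. eapply bnd_mono; [|apply bnd_V2; eauto]. lia. }
 assert (Hsplit : sumS (fun i => addS (Afam i) (V2fam Ls i)) = addS (sumS Afam) (sumS (V2fam Ls)))
   by (symmetry; apply sumS_add; eauto).
 assert (R1 : mulS Lk (sumS (T'fam Ls)) = mulS Ls (sumS (T'fam Lk))).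
 { apply (chain_sum (fun n => INR n * t n) zT L0 Ls Lk (Z.of_nat K) 1 0); auto.
   - intros n. destruct (le_lt_dec n K).
     + apply bnd_scal. eapply bnd_mono; [|apply bnd_zpow; auto]. unfold zT; lia.
     + apply bnd_scal0. rewrite hK; auto. ring.
   - apply (evz_fin K). intros m hm j. unfold scalS. rewrite hK; auto. ring. }
 assert (R2 : mulS Lk (sumS (V2fam Ls)) = mulS Ls (sumS (V2fam Lk))).
 { apply (chain_sum (fun i => v (S i) x t s) zV L0 Ls Lk (-3) 1 0); auto.
   - intros i. apply bnd_scal. eapply bnd_mono; [|apply bnd_zpow; auto]. unfold zV; lia.
   - apply (evz_bnd (-3)). intros i. apply bnd_scal. eapply bnd_mono; [|apply bnd_zpow; auto]. unfold zV; lia. }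
 unfold Ms. rewrite Hsplit. unfold Mk.
 assert (hsT : forall D BD, bnd BD D -> bnd (Z.of_nat K + BD) (sumS (T'fam D))).
 { intros D BD hD. apply bnd_sumS. intros; apply bnd_T'; auto. }
 assert (hsV : forall D BD, bnd BD D -> bnd (-3 + BD) (sumS (V2fam D))).
 { intros D BD hD. apply bnd_sumS. intros i. eapply bnd_mono; [|apply bnd_V2; eauto]. lia. }
 set (k := mkB _ _ hk). set (l := mkB _ _ hs). set (i := mkB _ _ hi).
 set (sT := mkB _ _ (hsT Ls 1%Z hs)). set (sTk := mkB _ _ (hsT Lk 0%Z hk)).
 set (sV := mkB _ _ (hsV Ls 1%Z hs)). set (sVk := mkB _ _ (hsV Lk 0%Z hk)).
 set (w := mkB _ _ (bnd_sumS _ _ (fun i => bnd_mono _ _ _ (ltac:(lia) : (- Z.of_nat i - 2 <= -2)%Z) (bnd_A i)))).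
 assert (E1 : bmul k sT = bmul l sTk) by (apply bs_ext; exact R1).
 assert (E2 : bmul k sV = bmul l sVk) by (apply bs_ext; exact R2).
 assert (E : bsub (bmul k (badd sT (badd bzero (badd (badd (bscal (INR N) i) (bscal (INR N * s) (bopp (bmul (bmul i i) l)))) (badd w sV)))))
                  (bmul l (badd sTk (badd bzero (badd (bscal (INR N * s) (bopp (bmul (bmul i i) k))) sVk))))
             = bmul k (badd (bscal (INR N) i) w)).
 { rewrite !bscal_bc.
   transitivity (badd (bmul k (badd (bmul (bc (INR N)) i) w)) (badd (bsub (bmul k sT) (bmul l sTk)) (bsub (bmul k sV) (bmul l sVk)))).
   - ring.
   - rewrite E1, E2. ring. }
 bsexact E.
Qed.
End MM.

Lemma exists_max R C j : bnd C R -> R j <> 0 -> exists d, R d <> 0 /\ bnd d R.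
Proof. intros hC hj. assert (hjC : (j <= C)%Z).
 { destruct (Z_le_gt_dec j C); auto. exfalso; apply hj, hC; lia. }
 remember (Z.to_nat (C - j)) as n. revert C hC hjC Heqn. induction n; intros C hC hjC Heqn.
 - exists j. split; auto. eapply bnd_mono; [|eauto]. lia.
 - destruct (Req_dec (R C) 0) as [h0|h0].
   + assert (j <> C) by (intros ->; exact (hj h0)).
     apply (IHn (C - 1)%Z); try lia. intros k hk. destruct (Z.eq_dec k C); [subst; auto|apply hC; lia].
   + exists C. auto. Qed.

Lemma uniq P Q B : bnd B P -> bnd B Q -> P B = 1 -> Q B = 1 ->
  mulS (dkS P) Q = mulS (dkS Q) P -> P = Q.
Proof. intros hP hQ h1 h2 H.
 set (Rr := subS P Q).
 assert (hR : bnd (B - 1) Rr).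
 { intros j hj. unfold Rr, subS. destruct (Z.eq_dec j B); [subst; rewrite h1, h2; ring|]. rewrite hP, hQ by lia. ring. }
 assert (HR : mulS (dkS Rr) Q = mulS (dkS Q) Rr).
 { unfold Rr. rewrite dk_sub.
   set (p := mkB _ _ hP). set (q := mkB _ _ hQ). set (dp := mkB _ _ (bnd_dk _ _ hP)). set (dq := mkB _ _ (bnd_dk _ _ hQ)).
   assert (E0 : bmul dp q = bmul dq p) by (apply bs_ext; exact H).
   assert (E : bmul (bsub dp dq) q = bmul dq (bsub p q)).
   { transitivity (badd (bsub (bmul dp q) (bmul dq p)) (bmul dq (bsub p q))); [ring|]. rewrite E0. ring. }
   exact (f_equal val E). }
 destruct (classic (exists j, Rr j <> 0)) as [[j hj]|hn].
 - exfalso. destruct (exists_max Rr (B - 1) j hR hj) as [d [hd hdb]].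
   assert (hdB : (d <= B - 1)%Z). { destruct (Z_le_gt_dec d (B - 1)); auto. exfalso. apply hd, hR. lia. }
   pose proof (f_equal (fun f => f (d - 1 + B)%Z) HR) as HH. simpl in HH.
   rewrite (mul_lead (d - 1) B _ _ (bnd_dk _ _ hdb) hQ) in HH.
   replace (d - 1 + B)%Z with (B - 1 + d)%Z in HH by lia.
   rewrite (mul_lead (B - 1) d _ _ (bnd_dk _ _ hQ) hdb) in HH.
   unfold dkS in HH. replace (d - 1 + 1)%Z with d in HH by lia. replace (B - 1 + 1)%Z with B in HH by lia.
   rewrite h2 in HH. apply hd. assert (IZR d <> IZR B) by (intros E; apply eq_IZR in E; lia).
   apply (Rmult_eq_reg_l (IZR d - IZR B)); [|lra]. lra.
 - extensionality j. destruct (Req_dec (Rr j) 0) as [e|e]; [unfold Rr, subS in e; lra|]. exfalso; apply hn; eauto.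
Qed.

Theorem mainTheorem4 (N : nat) (u v p : nat -> coef) :
  (0 < N)%nat ->
  (forall n, regular (u n)) -> (forall n, regular (v n)) -> (forall n, regular (p n)) ->
  dNmKP_solution N u v p ->
  forall x t s, finsupp t ->
    Pfield N p x t s =
    mulS (powS (Lfield u x t s) N)
      (expS (sumS (fun m =>
         scalS (-1 / INR (S m) * dsC (v (S m)) x t s)
               (zpowS (Lfield u x t s) (- Z.of_nat (S m)))))).
Proof.
 intros hN hu hv hp Hsol x t s ht.
 pose proof ht as [K hK].
 destruct (Hsol x t s ht) as (_ & _ & h3 & h4 & h5 & _). cbv zeta in h3, h4, h5.
 unfold bracket in h3, h4, h5.
 rewrite (dsF_M N u v x t s K hu hv ht hK) in h5. rewrite (dk_M N u v x t s) in h3, h5.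
 pose proof (KEY N u v x t s K hK) as HK.
 set (L0 := Lfield u x t s) in *.
 pose proof (Lshape_L u x t s) as hsh. fold L0 in hsh.
 pose proof hsh as [hL0 [hL1 _]].
 assert (hLk : bnd 0 (dkS L0)) by (apply (bnd_dk 1); auto).
 assert (hLs : bnd 1 (dsF (Lfield u) x t s)) by (apply (Derive_bnd (fun y => Lfield u x t y)); intros; apply Lshape_L).
 assert (hLx : bnd 1 (dxF (Lfield u) x t s)) by (apply (Derive_bnd (fun y => Lfield u y t s)); intros; apply Lshape_L).
 assert (hMx : bnd (Z.of_nat K) (dxF (Mfield N u v) x t s))
   by (apply (Derive_bnd (fun y => Mfield N u v y t s)); intros; apply (bnd_M N u v t K hK)).
 assert (hMs : bnd (Z.of_nat K) (Ms N u v x t s)).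
 { rewrite <- (dsF_M N u v x t s K hu hv ht hK). apply (Derive_bnd (fun y => Mfield N u v x t y)).
   intros; apply (bnd_M N u v t K hK). }
 assert (hMk : bnd (Z.of_nat K - 1) (Mk N u v x t s)).
 { rewrite <- (dk_M N u v x t s). apply bnd_dk. apply (bnd_M N u v t K hK). }
 set (P := Pfield N p x t s) in *.
 assert (hP : bnd (Z.of_nat N) P) by apply bnd_P.
 assert (hPk : bnd (Z.of_nat N - 1) (dkS P)) by (apply bnd_dk; auto).
 assert (hPx : bnd (Z.of_nat N) (dxF (Pfield N p) x t s)) by (apply (Derive_bnd (fun y => Pfield N p y t s)); intros; apply bnd_P).
 assert (hI : bnd (-1) (invS L0)) by (apply invS_bnd; auto).
 assert (hW : bnd (-2) (sumS (Afam u v x t s))).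
 { apply bnd_sumS. intros i. eapply bnd_mono; [|apply bnd_A]. lia. }
 set (k := mkB _ _ hLk). set (ls := mkB _ _ hLs). set (lx := mkB _ _ hLx). set (mx := mkB _ _ hMx).
 set (ms := mkB _ _ hMs). set (mk := mkB _ _ hMk). set (pp := mkB _ _ hP). set (pk := mkB _ _ hPk).
 set (px := mkB _ _ hPx). set (i := mkB _ _ hI). set (w := mkB _ _ hW).
 assert (E3 : bsub (bmul k mx) (bmul lx mk) = bone) by (apply bs_ext; exact h3).
 assert (E4 : bmul ls pp = bsub (bmul pk lx) (bmul px k)) by (apply bs_ext; exact h4).
 assert (E5 : bmul ms pp = bsub (bmul pk mx) (bmul px mk)) by (apply bs_ext; exact h5).
 assert (EK : bsub (bmul k ms) (bmul ls mk) = bmul k (badd (bscal (INR N) i) w)) by (apply bs_ext; exact HK).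
 set (Hb := bmul k (badd (bscal (INR N) i) w)).
 assert (EP : pk = bmul pp Hb).
 { unfold Hb. rewrite <- EK.
   transitivity (bmul pk (bsub (bmul k mx) (bmul lx mk))); [rewrite E3; ring|].
   transitivity (bsub (bmul k (bsub (bmul pk mx) (bmul px mk))) (bmul mk (bsub (bmul pk lx) (bmul px k)))); [ring|].
   rewrite <- E4, <- E5. ring. }
 set (G := sumS (fun m => scalS (-1 / INR (S m) * dsC (v (S m)) x t s) (zpowS L0 (- Z.of_nat (S m))))).
 assert (hG : bnd (-1) G).
 { apply bnd_sumS. intros m. apply bnd_scal. eapply bnd_mono; [|apply bnd_zpow; auto]. lia. }
 assert (HG : dkS G = mulS (dkS L0) (sumS (Afam u v x t s))).
 { unfold G. rewrite dk_sumS. rewrite (mulS_sumS _ 0 _ (-2)); auto.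
   2:{ apply (evz_bnd (-2)). intros m. eapply bnd_mono; [|apply bnd_A]. lia. }
   2:{ intros m. eapply bnd_mono; [|apply bnd_A]. lia. }
   apply sumS_ext. intros m. rewrite dk_scal, dk_zpow by auto. unfold Afam, zV, vs.
   replace (- Z.of_nat (S m) - 1)%Z with (- Z.of_nat (S m) - 1)%Z by reflexivity.
   pose proof (bnd_zpow L0 (- Z.of_nat (S m) - 1) hsh) as hz.
   set (zz := mkB _ _ hz).
   assert (E : bscal (-1 / INR (S m) * dsC (v (S m)) x t s) (bmul (bc (IZR (- Z.of_nat (S m)))) (bmul zz k))
               = bmul k (bscal (dsC (v (S m)) x t s) zz)).
   { rewrite !bscal_bc. transitivity (bmul (bmul (bc (-1 / INR (S m) * dsC (v (S m)) x t s)) (bc (IZR (- Z.of_nat (S m))))) (bmul zz k)); [ring|].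
     rewrite bc_mul. replace (-1 / INR (S m) * dsC (v (S m)) x t s * IZR (- Z.of_nat (S m))) with (dsC (v (S m)) x t s).
     ring. rewrite opp_IZR, <- INR_IZR_INZ. field. apply not_0_INR. lia. }
   exact (f_equal val E). }
 destruct N as [|n]; [lia|].
 assert (hpn : bnd (Z.of_nat n * 1) (powS L0 n)) by (apply bnd_pow; auto).
 assert (hpN : bnd (Z.of_nat (S n) * 1) (powS L0 (S n))) by (apply bnd_pow; auto).
 assert (hE : bnd 0 (expS G)) by (apply bnd_exp; auto).
 set (Q := mulS (powS L0 (S n)) (expS G)).
 assert (HQk : dkS Q = addS (mulS (mulS (cst (INR (S n))) (mulS (powS L0 n) (dkS L0))) (expS G))
                            (mulS (mulS L0 (powS L0 n)) (mulS (expS G) (mulS (dkS L0) (sumS (Afam u v x t s)))))).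
 { unfold Q. rewrite (dk_mul _ _ _ _ hpN hE), (dk_pow L0 1 n hL0), (dk_exp G hG), HG. reflexivity. }
 pose proof (invS_spec L0 hsh) as HI.
 set (l := mkB _ _ hL0). set (pn := mkB _ _ hpn). set (e := mkB _ _ hE).
 assert (E0 : bmul l i = bone) by (apply bs_ext; exact HI).
 set (qq := bmul (bmul l pn) e).
 assert (EQ : badd (bmul (bmul (bc (INR (S n))) (bmul pn k)) e) (bmul (bmul l pn) (bmul e (bmul k w))) = bmul qq Hb).
 { unfold qq, Hb. rewrite bscal_bc.
   set (LHS := badd (bmul (bmul (bc (INR (S n))) (bmul pn k)) e) (bmul (bmul l pn) (bmul e (bmul k w)))).
   transitivity (badd LHS (bmul (bmul (bmul (bc (INR (S n))) pn) (bmul k e)) (bsub (bmul l i) bone))).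
   - rewrite E0. ring.
   - unfold LHS. ring. }
 assert (Hfin : mulS (dkS P) Q = mulS (dkS Q) P).
 { rewrite HQk.
   assert (E : bmul pk qq = bmul (badd (bmul (bmul (bc (INR (S n))) (bmul pn k)) e) (bmul (bmul l pn) (bmul e (bmul k w)))) pp).
   { rewrite EQ, EP. ring. }
   exact (f_equal val E). }
 apply (uniq P Q (Z.of_nat (S n))); auto.
 - unfold Q. eapply bnd_mono; [|apply bnd_mul; eauto]. lia.
 - apply P_lead.
 - unfold Q. replace (Z.of_nat (S n)) with (Z.of_nat (S n) * 1 + 0)%Z by lia.
   rewrite (mul_lead _ _ _ _ hpN hE). rewrite pow_lead by auto. rewrite exp_lead by auto. ring.
Qed.
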